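(* Let $q \in \mathbb{N}$. Suppose $\psi(\cdot,t)\in \mathcal{F}$ and set $\bar{\psi}(\cdot,t) := \Upsilon (\psi(\cdot,t))$ for all $t \in \mathbb{R}_+$. The following are equivalent. (i) $\psi(\cdot,t) \in \mathcal{D}^q$ for all $t \ge 0$, and $\psi \in C^q(\mathbb{R}_+^2,\mathbb{R}_+)^{I}$. (ii) $\bar{\psi}(\cdot,t) \in \bar{\mathcal{D}}^q$ for all $t \ge 0$, and $\bar{\psi} \in C^q(\mathbb{R}_+^2,\mathbb{R}_+)^{I}$.
   Context: Fix $I\in\mathbb{N}$. $\mathcal{C}=\{f\in C(\mathbb{R}_+,\mathbb{R}_+):f(0)=0,f\text{ non-decreasing}\}$, $\mathcal{C}^\uparrow=\{f\in\mathcal{C}:f\text{ strictly increasing},\lim_{u\to\infty}f(u)=\infty\}$. $\mathcal{C}^q=\{f\in\mathcal{C}:f^{\mathbb{R}}\in C^q(\mathbb{R},\mathbb{R})\}$ where $f^{\mathbb{R}}$ is the extension of $f$ by $0$ to $(-\infty,0)$. For $\psi\in\mathcal{C}^I$, $\phi_i(u)=u-\sum_{j=1}^I2(i\wedge j)\psi_j(u)$. $\mathcal{F}=\{\psi\in\mathcal{C}^I:\phi_I\in\mathcal{C}^\uparrow\}$ (then every $\phi_i\in\mathcal{C}^\uparrow$), $\Upsilon(\psi)_i=\psi_i\circ\phi_i^{-1}$. $\mathcal{D}=\{\psi\in\mathcal{F}:\sum_ii\sup_{u_1\neq u_2}\frac{\psi_i(u_1)-\psi_i(u_2)}{\phi_i(u_1)-\phi_i(u_2)}<\frac12\}$,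 $\bar{\mathcal{D}}=\{\bar\psi\in\mathcal{C}^I:\sum_ii\sup_{z_1\neq z_2}\frac{\bar\psi_i(z_1)-\bar\psi_i(z_2)}{z_1-z_2}<\frac12\}$, $\mathcal{D}^q=\mathcal{D}\cap(\mathcal{C}^q)^I$, $\bar{\mathcal{D}}^q=\bar{\mathcal{D}}\cap(\mathcal{C}^q)^I$. *)

(* Defs.v *)
From Stdlib Require Export Reals Lra ClassicalEpsilon List.
From Coquelicot Require Export Coquelicot.
Open Scope R_scope.

Fixpoint sumR (n : nat) (f : nat -> R) : R :=
  match n with O => 0 | S m => sumR m f + f (S m) end.

Fixpoint sumRbar (n : nat) (f : nat -> Rbar) : Rbar :=
  match n with O => Finite 0 | S m => Rbar_plus (sumRbar m f) (f (S m)) end.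

Definition ext0 (f : R -> R) (u : R) : R := if Rle_dec 0 u then f u else 0.

Definition Cq_R (q : nat) (g : R -> R) : Prop :=
  (forall k x, (k <= q)%nat -> ex_derive_n g k x) /\
  (forall x, continuous (Derive_n g q) x).

Definition Rp : R -> Prop := fun x => 0 <= x.

(* the class \mathcal{C} (values off R_+ are irrelevant) *)
Definition classC (f : R -> R) : Prop :=
  f 0 = 0 /\
  (forall u, 0 <= u -> 0 <= f u) /\
  (forall u, 0 <= u -> filterlim f (within Rp (locally u)) (locally (f u))) /\
  (forall u1 u2, 0 <= u1 -> u1 <= u2 -> f u1 <= f u2).

Definition classCup (f : R -> R) : Prop :=
  classC f /\
  (forall u1 u2, 0 <= u1 -> u1 < u2 -> f u1 < f u2) /\
  is_lim f p_infty p_infty.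

Definition classCq (q : nat) (f : R -> R) : Prop :=
  classC f /\ Cq_R q (ext0 f).

Definition phi (I : nat) (psi : nat -> R -> R) (i : nat) (u : R) : R :=
  u - sumR I (fun j => 2 * INR (Nat.min i j) * psi j u).

Definition inF (I : nat) (psi : nat -> R -> R) : Prop :=
  (forall i, (1 <= i <= I)%nat -> classC (psi i)) /\ classCup (phi I psi I).

(* inverse on R_+ (meaningful when f is a bijection of R_+) *)
Definition inv_Rp (f : R -> R) (y : R) : R :=
  epsilon (inhabits 0) (fun x => 0 <= x /\ f x = y).

Definition Upsilon (I : nat) (psi : nat -> R -> R) (i : nat) (z : R) : R :=
  psi i (inv_Rp (phi I psi i) z).

Definition supq (I : nat) (psi : nat -> R -> R) (i : nat) : Rbar :=
  Lub_Rbar (fun r => exists u1 u2, 0 <= u1 /\ 0 <= u2 /\ u1 <> u2 /\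
     r = (psi i u1 - psi i u2) / (phi I psi i u1 - phi I psi i u2)).

Definition supbar (f : R -> R) : Rbar :=
  Lub_Rbar (fun r => exists z1 z2, 0 <= z1 /\ 0 <= z2 /\ z1 <> z2 /\
     r = (f z1 - f z2) / (z1 - z2)).

Definition inD (I : nat) (psi : nat -> R -> R) : Prop :=
  inF I psi /\
  Rbar_lt (sumRbar I (fun i => Rbar_mult (INR i) (supq I psi i))) (Finite (1/2)).

Definition inDbar (I : nat) (pb : nat -> R -> R) : Prop :=
  (forall i, (1 <= i <= I)%nat -> classC (pb i)) /\
  Rbar_lt (sumRbar I (fun i => Rbar_mult (INR i) (supbar (pb i)))) (Finite (1/2)).

Definition inDq (q I : nat) (psi : nat -> R -> R) : Prop :=
  inD I psi /\ (forall i, (1 <= i <= I)%nat -> classCq q (psi i)).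

Definition inDbarq (q I : nat) (pb : nat -> R -> R) : Prop :=
  inDbar I pb /\ (forall i, (1 <= i <= I)%nat -> classCq q (pb i)).

(* C^q(R_+^2, R_+): one-sided partial derivatives within the closed quadrant *)
Definition quad (p : R * R) : Prop := 0 <= fst p /\ 0 <= snd p.

Definition pderiv_u (F : R -> R -> R) (u t v : R) : Prop :=
  filterlim (fun h => (F (u + h) t - F u t) / h)
    (within (fun h => h <> 0 /\ 0 <= u + h) (locally 0)) (locally v).

Definition pderiv_t (F : R -> R -> R) (u t v : R) : Prop :=
  filterlim (fun h => (F u (t + h) - F u t) / h)
    (within (fun h => h <> 0 /\ 0 <= t + h) (locally 0)) (locally v).

(* D l = mixed partial derivative along the directions in l (true = u, false = t),
   innermost derivative last in the list *)
Definition Cq_quad (q : nat) (g : R -> R -> R) : Prop :=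
  (forall u t, 0 <= u -> 0 <= t -> 0 <= g u t) /\
  exists D : list bool -> R -> R -> R,
    (forall u t, 0 <= u -> 0 <= t -> D nil u t = g u t) /\
    (forall l u t, (length l < q)%nat -> 0 <= u -> 0 <= t ->
        pderiv_u (D l) u t (D (true :: l) u t) /\
        pderiv_t (D l) u t (D (false :: l) u t)) /\
    (forall l u t, (length l <= q)%nat -> 0 <= u -> 0 <= t ->
        filterlim (fun p : R * R => D l (fst p) (snd p))
          (within quad (locally (u, t))) (locally (D l u t))).

(* Main.v *)
Require Import Defs.
From Stdlib Require Import Lia Classical.
Set Warnings "-ambiguous-paths".

Definition dom (b : bool) (x : R) : Prop := if b then 0 <= x else True.

Definition near1 (P : R -> Prop) (Q : R -> Prop) : Prop :=
  exists d, 0 < d /\ forall h, Rabs h < d -> P h -> Q h.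

Definition near2 (b : bool) (u t : R) (Q : R * R -> Prop) : Prop :=
  exists d, 0 < d /\ forall p : R * R, dom b (fst p) -> 0 <= snd p ->
     Rabs (fst p - u) < d -> Rabs (snd p - t) < d -> Q p.

Global Instance near1_filter P : Filter (near1 P).
Proof.
  constructor.
  - exists 1; split; [lra|auto].
  - intros Q R0 [d1 [H1 K1]] [d2 [H2 K2]]. exists (Rmin d1 d2); split.
    + apply Rmin_pos; auto.
    + intros h Hh Ph; split; [apply K1|apply K2]; auto;
      eapply Rlt_le_trans; eauto; [apply Rmin_l|apply Rmin_r].
  - intros Q R0 HQ [d [H K]]. exists d; split; auto.
Qed.

Global Instance near2_filter b u t : Filter (near2 b u t).
Proof.
  constructor.
  - exists 1; split; [lra|auto].
  - intros Q R0 [d1 [H1 K1]] [d2 [H2 K2]]. exists (Rmin d1 d2); split.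
    + apply Rmin_pos; auto.
    + intros p Dp Tp Hu Ht; split; [apply K1|apply K2]; auto;
      eapply Rlt_le_trans; eauto; solve [apply Rmin_l|apply Rmin_r].
  - intros Q R0 HQ [d [H K]]. exists d; split; auto.
Qed.

Definition tends {T} (F : (T -> Prop) -> Prop) (f : T -> R) (v : R) : Prop :=
  forall eps, 0 < eps -> F (fun x => Rabs (f x - v) < eps).

Section Tends.
Context {T : Type} (F : (T -> Prop) -> Prop) {FF : Filter F}.

Lemma tends_const c : tends F (fun _ => c) c.
Proof. intros e He. apply filter_forall. intros x. unfold Rminus; rewrite Rplus_opp_r, Rabs_R0; auto. Qed.

Lemma tends_ext f g v : (F (fun x => f x = g x)) -> tends F f v -> tends F g v.
Proof.
  intros E H e He. generalize (filter_and _ _ E (H e He)). apply filter_imp.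
  intros x [-> K]; auto.
Qed.

Lemma tends_approx X B C a b c :
  tends F B b -> tends F C c ->
  (forall eps, 0 < eps -> F (fun x => exists m, Rabs (m - a) < eps /\ X x = m * B x + C x)) ->
  tends F X (a * b + c).
Proof.
  intros HB HC HX e He.
  set (K := Rabs b + 1).
  assert (HK : 0 < K) by (unfold K; generalize (Rabs_pos b); lra).
  set (A := Rabs a + 1).
  assert (HA : 0 < A) by (unfold A; generalize (Rabs_pos a); lra).
  assert (e1 : 0 < e / (3 * K)) by (apply Rdiv_lt_0_compat; lra).
  assert (e2 : 0 < e / (3 * A)) by (apply Rdiv_lt_0_compat; lra).
  assert (e3 : 0 < e / 3) by lra.
  assert (e4 : 0 < Rmin 1 (e / (3*A))) by (apply Rmin_pos; lra).
  generalize (filter_and _ _ (HX _ e1) (filter_and _ _ (HB _ e4) (HC _ e3))).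
  apply filter_imp. intros x [[m [Hm ->]] [Hb Hc]].
  assert (Hb1 : Rabs (B x - b) < 1) by (eapply Rlt_le_trans; [apply Hb|apply Rmin_l]).
  assert (Hb2 : Rabs (B x - b) < e/(3*A)) by (eapply Rlt_le_trans; [apply Hb|apply Rmin_r]).
  assert (HBx : Rabs (B x) <= K).
  { unfold K. replace (B x) with ((B x - b) + b) by ring.
    generalize (Rabs_triang (B x - b) b); lra. }
  replace (m * B x + C x - (a * b + c)) with ((m - a) * B x + (a * (B x - b) + (C x - c))) by ring.
  eapply Rle_lt_trans; [apply Rabs_triang|].
  eapply Rle_lt_trans; [apply Rplus_le_compat_l, Rabs_triang|].
  rewrite !Rabs_mult.
  assert (T1 : Rabs (m - a) * Rabs (B x) <= e / (3*K) * K).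
  { apply Rmult_le_compat; auto using Rabs_pos; lra. }
  assert (T2 : Rabs a * Rabs (B x - b) <= A * (e / (3 * A))).
  { apply Rmult_le_compat; auto using Rabs_pos; [unfold A; lra | lra]. }
  replace (e / (3*K) * K) with (e/3) in T1 by (field; lra).
  replace (A * (e / (3*A))) with (e/3) in T2 by (field; lra).
  lra.
Qed.

Lemma tends_plus f g a b : tends F f a -> tends F g b -> tends F (fun x => f x + g x) (a + b).
Proof.
  intros Hf Hg.
  replace (a + b) with (1 * a + b) by ring.
  apply tends_approx with (B := f) (C := g); auto.
  intros e He. apply filter_forall. intros x. exists 1. split; [|ring].
  unfold Rminus; rewrite Rplus_opp_r, Rabs_R0; auto.
Qed.

Lemma tends_mult f g a b : tends F f a -> tends F g b -> tends F (fun x => f x * g x) (a * b).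
Proof.
  intros Hf Hg.
  replace (a * b) with (a * b + 0) by ring.
  apply tends_approx with (B := g) (C := fun _ => 0); auto using tends_const.
  intros e He. generalize (Hf e He). apply filter_imp. intros x Hx.
  exists (f x); split; auto; ring.
Qed.

Lemma tends_scal c f a : tends F f a -> tends F (fun x => c * f x) (c * a).
Proof. intros H. apply tends_mult; auto using tends_const. Qed.

Lemma tends_opp f a : tends F f a -> tends F (fun x => - f x) (- a).
Proof.
  intros H. replace (-a) with (-1 * a) by ring.
  apply tends_ext with (fun x => -1 * f x). apply filter_forall; intros; ring.
  apply tends_scal; auto.
Qed.

Lemma tends_minus f g a b : tends F f a -> tends F g b -> tends F (fun x => f x - g x) (a - b).
Proof. intros; apply tends_plus; auto; apply tends_opp; auto. Qed.

Lemma tends_inv f a : a <> 0 -> tends F f a -> tends F (fun x => / f x) (/ a).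
Proof.
  intros Ha H e He.
  assert (Ha' : 0 < Rabs a) by (apply Rabs_pos_lt; auto).
  set (d := Rmin (Rabs a / 2) (e * (Rabs a * Rabs a) / 2)).
  assert (Hd : 0 < d).
  { apply Rmin_pos; [lra|]. apply Rdiv_lt_0_compat; [|lra]. apply Rmult_lt_0_compat; auto. apply Rmult_lt_0_compat; auto. }
  generalize (H d Hd). apply filter_imp. intros x Hx.
  assert (H1 : Rabs (f x - a) < Rabs a / 2) by (eapply Rlt_le_trans; [apply Hx|apply Rmin_l]).
  assert (H2 : Rabs (f x - a) < e * (Rabs a * Rabs a) / 2) by (eapply Rlt_le_trans; [apply Hx|apply Rmin_r]).
  assert (Hfx : Rabs a / 2 < Rabs (f x)).
  { generalize (Rabs_triang_inv a (a - f x)). replace (a - (a - f x)) with (f x) by ring.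
    rewrite (Rabs_minus_sym a (f x)). lra. }
  assert (Hf0 : f x <> 0). { intros E; rewrite E, Rabs_R0 in Hfx; lra. }
  replace (/ f x - / a) with ((a - f x) / (f x * a)) by (field; auto).
  unfold Rdiv. rewrite Rabs_mult, Rabs_inv, Rabs_mult.
  rewrite (Rabs_minus_sym a (f x)).
  apply (Rmult_lt_reg_r (Rabs (f x) * Rabs a)). apply Rmult_lt_0_compat; lra.
  rewrite Rmult_assoc, Rinv_l, Rmult_1_r.
  2:{ apply Rgt_not_eq. apply Rmult_lt_0_compat; lra. }
  apply Rlt_le_trans with (e * (Rabs a * Rabs a) / 2); auto.
  assert (e * (Rabs a / 2 * Rabs a) <= e * (Rabs (f x) * Rabs a)).
  { apply Rmult_le_compat_l; [lra|]. apply Rmult_le_compat_r; lra. }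
  lra.
Qed.

Lemma tends_comp_cont g f a : tends F f a ->
  (forall e, 0 < e -> exists d, 0 < d /\ forall y, Rabs (y - a) < d -> Rabs (g y - g a) < e) ->
  tends F (fun x => g (f x)) (g a).
Proof.
  intros H Hg e He. destruct (Hg e He) as [d [Hd K]].
  generalize (H d Hd). apply filter_imp. auto.
Qed.


End Tends.

Lemma tends_unique1 P f a b : (forall d, 0 < d -> exists h, Rabs h < d /\ P h) ->
  tends (near1 P) f a -> tends (near1 P) f b -> a = b.
Proof.
  intros HP Ha Hb. apply Rminus_diag_uniq. apply Rabs_eq_0.
  destruct (Rle_lt_or_eq_dec 0 (Rabs (a - b)) (Rabs_pos _)) as [Hp|Hp]; [|auto].
  exfalso. set (e := Rabs (a-b) / 2). assert (He : 0 < e) by (unfold e; lra).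
  destruct (Ha e He) as [d1 [Hd1 K1]]. destruct (Hb e He) as [d2 [Hd2 K2]].
  destruct (HP (Rmin d1 d2) (Rmin_pos _ _ Hd1 Hd2)) as [h [Hh Ph]].
  assert (A1 := K1 h (Rlt_le_trans _ _ _ Hh (Rmin_l _ _)) Ph).
  assert (A2 := K2 h (Rlt_le_trans _ _ _ Hh (Rmin_r _ _)) Ph).
  generalize (Rabs_triang (f h - b) (a - f h)). replace (f h - b + (a - f h)) with (a - b) by ring.
  rewrite <- (Rabs_Ropp (a - f h)). replace (- (a - f h)) with (f h - a) by ring. unfold e in *. lra.
Qed.

Lemma tends_ge1 P f a c : (forall d, 0 < d -> exists h, Rabs h < d /\ P h) ->
  tends (near1 P) f a -> near1 P (fun h => c <= f h) -> c <= a.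
Proof.
  intros HP Ha [d0 [Hd0 K0]]. apply Rnot_lt_le. intros Hlt.
  destruct (Ha (c - a) ltac:(lra)) as [d1 [Hd1 K1]].
  destruct (HP (Rmin d0 d1) (Rmin_pos _ _ Hd0 Hd1)) as [h [Hh Ph]].
  assert (A0 := K0 h (Rlt_le_trans _ _ _ Hh (Rmin_l _ _)) Ph).
  assert (A1 := K1 h (Rlt_le_trans _ _ _ Hh (Rmin_r _ _)) Ph).
  apply Rabs_def2 in A1. lra.
Qed.

Lemma approx1 P X B C a b c :
  tends (near1 P) B b -> tends (near1 P) C c ->
  (forall eps, 0 < eps -> near1 P (fun x => exists m, Rabs (m - a) < eps /\ X x = m * B x + C x)) ->
  tends (near1 P) X (a * b + c).
Proof. apply tends_approx; apply near1_filter. Qed.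

Lemma near1_P P : near1 P P.
Proof. exists 1; split; [lra|auto]. Qed.

Lemma near2_P b u t : near2 b u t (fun p => dom b (fst p) /\ 0 <= snd p /\ Rabs (fst p - u) < 1 /\ Rabs (snd p - t) < 1).
Proof. exists 1; split; [lra|auto]. Qed.

Lemma near1_small P d : 0 < d -> near1 P (fun h => Rabs h < d).
Proof. intros Hd; exists d; split; auto. Qed.

Global Hint Resolve near1_filter near2_filter : core.

Definition Pu b u := fun h => h <> 0 /\ dom b (u + h).
Definition Pt t := fun h => h <> 0 /\ 0 <= t + h.
Definition pdu b (F : R -> R -> R) u t v := tends (near1 (Pu b u)) (fun h => (F (u+h) t - F u t) / h) v.
Definition pdt (F : R -> R -> R) u t v := tends (near1 (Pt t)) (fun h => (F u (t+h) - F u t) / h) v.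
Definition cont2 b (F : R -> R -> R) u t := tends (near2 b u t) (fun p => F (fst p) (snd p)) (F u t).

Fixpoint Ck (b : bool) (k : nat) (F : R -> R -> R) : Prop :=
  (forall u t, dom b u -> 0 <= t -> cont2 b F u t) /\
  match k with
  | O => True
  | S k' => exists Fu Ft : R -> R -> R,
      (forall u t, dom b u -> 0 <= t -> pdu b F u t (Fu u t) /\ pdt F u t (Ft u t)) /\
      Ck b k' Fu /\ Ck b k' Ft
  end.

Lemma Rabs_sub_diag x : Rabs (x - x) = 0.
Proof. unfold Rminus; rewrite Rplus_opp_r; apply Rabs_R0. Qed.

Lemma dom_add b u h : dom b u -> 0 <= h -> dom b (u + h).
Proof. destruct b; simpl; auto; lra. Qed.

Lemma Pu_proper b u : dom b u -> forall d, 0 < d -> exists h, Rabs h < d /\ Pu b u h.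
Proof.
  intros Du d Hd. exists (d/2). split.
  - rewrite Rabs_pos_eq; lra.
  - split; [lra|]. apply dom_add; auto; lra.
Qed.

Lemma Pt_proper t : 0 <= t -> forall d, 0 < d -> exists h, Rabs h < d /\ Pt t h.
Proof.
  intros Dt d Hd. exists (d/2). split.
  - rewrite Rabs_pos_eq; lra.
  - split; lra.
Qed.

Lemma pdu_unique b F u t v w : dom b u -> pdu b F u t v -> pdu b F u t w -> v = w.
Proof. intros D; apply tends_unique1; apply Pu_proper; auto. Qed.
Lemma pdt_unique F u t v w : 0 <= t -> pdt F u t v -> pdt F u t w -> v = w.
Proof. intros D; apply tends_unique1; apply Pt_proper; auto. Qed.

Lemma cont2_slice_u b F u t : 0 <= t -> cont2 b F u t ->
  tends (near1 (Pu b u)) (fun h => F (u+h) t) (F u t).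
Proof.
  intros Ht H e He. destruct (H e He) as [d [Hd K]]. exists d; split; auto.
  intros h Hh [_ Dh]. apply (K (u+h, t)); simpl; auto.
  replace (u + h - u) with h by ring; auto. rewrite Rabs_sub_diag; auto.
Qed.

Lemma cont2_slice_t b F u t : dom b u -> cont2 b F u t ->
  tends (near1 (Pt t)) (fun h => F u (t+h)) (F u t).
Proof.
  intros Du H e He. destruct (H e He) as [d [Hd K]]. exists d; split; auto.
  intros h Hh [_ Dh]. apply (K (u, t+h)); simpl; auto.
  rewrite Rabs_sub_diag; auto. replace (t + h - t) with h by ring; auto.
Qed.

Lemma cont2_ext b F G u t : (forall u t, dom b u -> 0 <= t -> F u t = G u t) ->
  dom b u -> 0 <= t -> cont2 b F u t -> cont2 b G u t.
Proof.
  intros E Du Dt H e He. destruct (H e He) as [d [Hd K]]. exists d; split; auto.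
  intros p D1 D2 H1 H2. rewrite <- !E; auto.
Qed.

Lemma pdu_ext b F G u t v : (forall u t, dom b u -> 0 <= t -> F u t = G u t) ->
  dom b u -> 0 <= t -> pdu b F u t v -> pdu b G u t v.
Proof.
  intros E Du Dt H e He. destruct (H e He) as [d [Hd K]]. exists d; split; auto.
  intros h Hh [Hh0 Dh]. rewrite <- !E; auto. apply K; auto. split; auto.
Qed.

Lemma pdt_ext b F G u t v : (forall u t, dom b u -> 0 <= t -> F u t = G u t) ->
  dom b u -> 0 <= t -> pdt F u t v -> pdt G u t v.
Proof.
  intros E Du Dt H e He. destruct (H e He) as [d [Hd K]]. exists d; split; auto.
  intros h Hh [Hh0 Dh]. rewrite <- !E; auto. apply K; auto. split; auto.
Qed.

Lemma Ck_ext b k F G : (forall u t, dom b u -> 0 <= t -> F u t = G u t) -> Ck b k F -> Ck b k G.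
Proof.
  destruct k as [|k]; simpl; intros E [Hc Hd]; split.
  - intros; eapply cont2_ext; eauto.
  - auto.
  - intros; eapply cont2_ext; eauto.
  - destruct Hd as [Fu [Ft [HD [H1 H2]]]]. exists Fu, Ft; split; auto.
    intros u t Du Dt; destruct (HD u t Du Dt); split.
    + eapply pdu_ext; eauto.
    + eapply pdt_ext; eauto.
Qed.

Lemma Ck_cont b k F : Ck b k F -> forall u t, dom b u -> 0 <= t -> cont2 b F u t.
Proof. destruct k; simpl; tauto. Qed.

Lemma Ck_S b k F : Ck b (S k) F -> Ck b k F.
Proof.
  revert F; induction k as [|k IH]; intros F [Hc Hd].
  - simpl; auto.
  - destruct Hd as [Fu [Ft [HD [H1 H2]]]]. split; auto.
    exists Fu, Ft; split; auto.
Qed.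

Lemma Ck_le b k m F : (k <= m)%nat -> Ck b m F -> Ck b k F.
Proof.
  intros Hle; induction Hle; auto. intros H; apply IHHle, Ck_S; auto.
Qed.

Definition cl (b : bool) (v : R) : R := if b then Rmax 0 v else v.

Lemma cl_dom b v : dom b (cl b v).
Proof. destruct b; simpl; auto. apply Rmax_l. Qed.

Lemma cl_id b v : dom b v -> cl b v = v.
Proof. destruct b; simpl; auto. intros; apply Rmax_right; auto. Qed.

Lemma cl_lip b y c : dom b c -> Rabs (cl b y - c) <= Rabs (y - c).
Proof.
  destruct b; simpl; [|intros; lra]. intros Hc.
  destruct (Rle_dec 0 y).
  - rewrite Rmax_right; auto; lra.
  - rewrite Rmax_left by lra. rewrite Rabs_minus_sym, (Rabs_minus_sym y).
    rewrite Rminus_0_r, Rabs_pos_eq, Rabs_pos_eq; lra.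
Qed.

Lemma dom_between b x y c : dom b x -> dom b y -> Rmin x y <= c -> dom b c.
Proof.
  destruct b; simpl; auto. intros Hx Hy Hc. unfold Rmin in Hc; destruct Rle_dec; lra.
Qed.

Lemma mvt b F Fu t x y : 0 <= t -> dom b x -> dom b y ->
  (forall u, dom b u -> pdu b F u t (Fu u t)) ->
  (forall u, dom b u -> cont2 b F u t) ->
  exists xi, dom b xi /\ Rmin x y <= xi <= Rmax x y /\ F y t - F x t = Fu xi t * (y - x).
Proof.
  intros Ht Dx Dy HD HC.
  destruct (MVT_gen (fun v => F (cl b v) t) x y (fun v => Fu v t)) as [c [Hc E]].
  - intros c Hc. cbv zeta in Hc. apply is_derive_Reals. intros eps Heps.
    assert (Dc : dom b c) by (apply (dom_between b x y); auto; lra).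
    destruct (HD c Dc eps Heps) as [d [Hd K]].
    assert (Hp : 0 < Rmin d (c - Rmin x y)) by (apply Rmin_pos; lra).
    exists (mkposreal _ Hp). simpl. intros h Hh0 Hh.
    assert (Hh1 : Rabs h < d) by (eapply Rlt_le_trans; [apply Hh|apply Rmin_l]).
    assert (Hh2 : Rabs h < c - Rmin x y) by (eapply Rlt_le_trans; [apply Hh|apply Rmin_r]).
    assert (Dch : dom b (c + h)).
    { apply (dom_between b x y); auto. apply Rabs_def2 in Hh2. lra. }
    rewrite !cl_id; auto. apply K; auto. split; auto.
  - intros c Hc. apply continuity_pt_filterlim. apply filterlim_locally.
    intros eps.
    assert (Dc : dom b c) by (apply (dom_between b x y); auto; lra).
    destruct (HC c Dc eps (cond_pos eps)) as [d [Hd K]].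
    exists (mkposreal d Hd). intros z Hz. change (Rabs (F (cl b z) t - F (cl b c) t) < eps).
    rewrite (cl_id b c Dc). apply (K (cl b z, t)); simpl; auto using cl_dom.
    + eapply Rle_lt_trans; [apply cl_lip; auto|]. apply Hz.
    + rewrite Rabs_sub_diag; auto.
  - exists c. split; [apply (dom_between b x y); auto; lra|]. split; auto.
    rewrite !cl_id in E; auto.
Qed.

Lemma Rmin_Rmax_abs x y c : Rmin x y <= c <= Rmax x y -> Rabs (c - x) <= Rabs (y - x).
Proof.
  intros [H1 H2]. unfold Rmin, Rmax in *. destruct Rle_dec;
  repeat (rewrite Rabs_pos_eq by lra) || (rewrite Rabs_left1 by lra); lra.
Qed.

Lemma cont2_const b c u t : cont2 b (fun _ _ => c) u t.
Proof. intros e He. apply filter_forall. intros; rewrite Rabs_sub_diag; auto. Qed.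

Lemma pdu_const b c u t : pdu b (fun _ _ => c) u t 0.
Proof. intros e He. apply filter_forall. intros h. unfold Rminus; rewrite Rplus_opp_r.
  unfold Rdiv; rewrite Rmult_0_l, Rplus_opp_r, Rabs_R0; auto. Qed.
Lemma pdt_const c u t : pdt (fun _ _ => c) u t 0.
Proof. intros e He. apply filter_forall. intros h. unfold Rminus; rewrite Rplus_opp_r.
  unfold Rdiv; rewrite Rmult_0_l, Rplus_opp_r, Rabs_R0; auto. Qed.

Lemma pdt_cst F u t c : (forall s, F u s = c) -> pdt F u t 0.
Proof. intros E e He. apply filter_forall. intros h. rewrite !E. unfold Rminus; rewrite Rplus_opp_r.
  unfold Rdiv; rewrite Rmult_0_l, Rplus_opp_r, Rabs_R0; auto. Qed.
Lemma pdu_cst b F u t c : (forall s, F s t = c) -> pdu b F u t 0.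
Proof. intros E e He. apply filter_forall. intros h. rewrite !E. unfold Rminus; rewrite Rplus_opp_r.
  unfold Rdiv; rewrite Rmult_0_l, Rplus_opp_r, Rabs_R0; auto. Qed.

Lemma Ck_const b k c : Ck b k (fun _ _ => c).
Proof.
  revert c; induction k; intros c; split; auto using cont2_const.
  exists (fun _ _ => 0), (fun _ _ => 0). split; [|split; apply IHk].
  intros; split; [apply pdu_const|apply pdt_const].
Qed.

Lemma Ck_u b k : Ck b k (fun u _ => u).
Proof.
  destruct k; split.
  - intros u t _ _ e He. exists e; split; auto.
  - auto.
  - intros u t _ _ e He. exists e; split; auto.
  - exists (fun _ _ => 1), (fun _ _ => 0). split; [|split; apply Ck_const].
    intros u t _ _; split.
    + intros e He. exists 1; split; [lra|]. intros h _ [Hh _].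
      replace ((u + h - u) / h - 1) with 0 by (field; auto). rewrite Rabs_R0; auto.
    + apply pdt_cst with u; auto.
Qed.

Lemma Ck_t b k : Ck b k (fun _ t => t).
Proof.
  destruct k; split.
  - intros u t _ _ e He. exists e; split; auto.
  - auto.
  - intros u t _ _ e He. exists e; split; auto.
  - exists (fun _ _ => 0), (fun _ _ => 1). split; [|split; apply Ck_const].
    intros u t _ _; split.
    + apply pdu_cst with t; auto.
    + intros e He. exists 1; split; [lra|]. intros h _ [Hh _].
      replace ((t + h - t) / h - 1) with 0 by (field; auto). rewrite Rabs_R0; auto.
Qed.

Lemma Ck_plus b k F G : Ck b k F -> Ck b k G -> Ck b k (fun u t => F u t + G u t).
Proof.
  revert F G; induction k as [|k IH]; intros F G [HcF HdF] [HcG HdG]; split.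
  - intros u t Du Dt. apply (tends_plus _ _ _ _ _ (HcF u t Du Dt) (HcG u t Du Dt)).
  - auto.
  - intros u t Du Dt. apply (tends_plus _ _ _ _ _ (HcF u t Du Dt) (HcG u t Du Dt)).
  - destruct HdF as [Fu [Ft [HF [HF1 HF2]]]]. destruct HdG as [Gu [Gt [HG [HG1 HG2]]]].
    exists (fun u t => Fu u t + Gu u t), (fun u t => Ft u t + Gt u t).
    split; [|split; apply IH; auto].
    intros u t Du Dt. destruct (HF u t Du Dt) as [A1 A2]. destruct (HG u t Du Dt) as [B1 B2]. split.
    + refine (tends_ext _ _ _ _ _ (tends_plus _ _ _ _ _ A1 B1)).
      apply filter_forall; intros h; simpl. unfold Rdiv; ring.
    + refine (tends_ext _ _ _ _ _ (tends_plus _ _ _ _ _ A2 B2)).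
      apply filter_forall; intros h; simpl. unfold Rdiv; ring.
Qed.

Lemma Ck_mult b k F G : Ck b k F -> Ck b k G -> Ck b k (fun u t => F u t * G u t).
Proof.
  revert F G; induction k as [|k IH]; intros F G HF HG.
  - destruct HF as [HcF _]; destruct HG as [HcG _]. split; auto.
    intros u t Du Dt. apply (tends_mult _ _ _ _ _ (HcF u t Du Dt) (HcG u t Du Dt)).
  - assert (HF0 := Ck_S _ _ _ HF). assert (HG0 := Ck_S _ _ _ HG).
    destruct HF as [HcF HdF]; destruct HG as [HcG HdG]. split.
    + intros u t Du Dt. apply (tends_mult _ _ _ _ _ (HcF u t Du Dt) (HcG u t Du Dt)).
    + destruct HdF as [Fu [Ft [HF [HF1 HF2]]]]. destruct HdG as [Gu [Gt [HG [HG1 HG2]]]].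
      exists (fun u t => F u t * Gu u t + G u t * Fu u t),
             (fun u t => F u t * Gt u t + G u t * Ft u t).
      split; [|split; apply Ck_plus; apply IH; auto].
      intros u t Du Dt. destruct (HF u t Du Dt) as [A1 A2]. destruct (HG u t Du Dt) as [B1 B2]. split.
      * apply approx1 with (B := fun h => (G (u+h) t - G u t) / h)
          (C := fun h => G u t * ((F (u+h) t - F u t)/h)); [exact B1 | exact (tends_scal _ _ _ _ A1) |].
        intros e He. generalize (cont2_slice_u _ _ _ _ Dt (HcF u t Du Dt) e He).
        apply filter_imp. intros h Hh. exists (F (u+h) t). split; auto.
        destruct (Req_dec h 0) as [->|Hh0].
        { unfold Rdiv; rewrite Rinv_0; ring. }
        field; auto.
      * apply approx1 with (B := fun h => (G u (t+h) - G u t) / h)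
          (C := fun h => G u t * ((F u (t+h) - F u t)/h)); [exact B2 | exact (tends_scal _ _ _ _ A2) |].
        intros e He. generalize (cont2_slice_t _ _ _ _ Du (HcF u t Du Dt) e He).
        apply filter_imp. intros h Hh. exists (F u (t+h)). split; auto.
        destruct (Req_dec h 0) as [->|Hh0].
        { unfold Rdiv; rewrite Rinv_0; ring. }
        field; auto.
Qed.

Lemma Ck_scal b k c F : Ck b k F -> Ck b k (fun u t => c * F u t).
Proof. intros; apply Ck_mult; auto using Ck_const. Qed.

Lemma Ck_minus b k F G : Ck b k F -> Ck b k G -> Ck b k (fun u t => F u t - G u t).
Proof.
  intros HF HG. apply Ck_ext with (fun u t => F u t + (-1) * G u t).
  intros; ring. apply Ck_plus; auto. apply Ck_scal; auto.
Qed.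

Lemma Ck_sumR b k n (f : nat -> R -> R -> R) :
  (forall j, (1 <= j <= n)%nat -> Ck b k (f j)) -> Ck b k (fun u t => sumR n (fun j => f j u t)).
Proof.
  induction n as [|n IH]; intros H; simpl.
  - apply Ck_const.
  - apply Ck_plus. apply IH; intros; apply H; lia. apply H; lia.
Qed.

Lemma approx_tends P X M B C a b c :
  tends (near1 P) M a -> tends (near1 P) B b -> tends (near1 P) C c ->
  near1 P (fun h => X h = M h * B h + C h) -> tends (near1 P) X (a * b + c).
Proof.
  intros HM HB HC HE. apply approx1 with (B := B) (C := C); auto.
  intros e He. generalize (filter_and _ _ HE (HM e He)). apply filter_imp.
  intros h [E K]. exists (M h); auto.
Qed.

Lemma inv_cont a : a <> 0 -> forall e, 0 < e -> exists d, 0 < d /\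
  forall y, Rabs (y - a) < d -> Rabs (/ y - / a) < e.
Proof.
  intros Ha e He.
  assert (T : tends (near1 (fun _ => True)) (fun h => a + h) a).
  { intros e' He'. exists e'; split; auto. intros h Hh _. replace (a + h - a) with h by ring; auto. }
  destruct (tends_inv _ _ _ Ha T e He) as [d [Hd K]]. exists d; split; auto.
  intros y Hy. replace y with (a + (y - a)) by ring. apply K; auto.
Qed.

Lemma cont2_comp b F a u t :
  (forall u t, dom b u -> 0 <= t -> dom b (a u t)) -> dom b u -> 0 <= t ->
  cont2 b F (a u t) t -> cont2 b a u t -> cont2 b (fun u t => F (a u t) t) u t.
Proof.
  intros Da Du Dt HF Ha e He. destruct (HF e He) as [d1 [Hd1 K1]].
  destruct (Ha d1 Hd1) as [d2 [Hd2 K2]]. exists (Rmin d1 d2); split; [apply Rmin_pos; auto|].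
  intros [x s] Dx Ds Hx Hs; simpl in *.
  apply (K1 (a x s, s)); simpl; auto.
  - apply (K2 (x, s)); simpl; auto; eapply Rlt_le_trans; eauto; apply Rmin_r.
  - eapply Rlt_le_trans; eauto; apply Rmin_l.
Qed.

Lemma pdu_comp b F Fu a au u t :
  (forall u t, dom b u -> 0 <= t -> dom b (a u t)) -> dom b u -> 0 <= t ->
  (forall x s, dom b x -> 0 <= s -> pdu b F x s (Fu x s)) ->
  (forall x s, dom b x -> 0 <= s -> cont2 b F x s) ->
  cont2 b Fu (a u t) t -> cont2 b a u t -> pdu b a u t au ->
  pdu b (fun u t => F (a u t) t) u t (Fu (a u t) t * au).
Proof.
  intros Da Du Dt HFd HFc HFu Hac Had.
  unfold pdu. replace (Fu (a u t) t * au) with (Fu (a u t) t * au + 0) by ring.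
  apply approx1 with (B := fun h => (a (u+h) t - a u t) / h) (C := fun _ => 0);
    [exact Had | exact (tends_const _ _) |].
  intros e He. destruct (HFu e He) as [d1 [Hd1 K1]].
  generalize (filter_and _ _ (near1_P _) (cont2_slice_u _ _ _ _ Dt Hac d1 Hd1)). apply filter_imp.
  intros h [[Hh0 Dh] Hh].
  destruct (mvt b F Fu t (a u t) (a (u+h) t) Dt (Da u t Du Dt) (Da (u+h) t Dh Dt)
     (fun x Dx => HFd x t Dx Dt) (fun x Dx => HFc x t Dx Dt)) as [xi [Dxi [Hxi E]]].
  - exists (Fu xi t). split.
    + apply (K1 (xi, t)); simpl; auto. eapply Rle_lt_trans; [apply Rmin_Rmax_abs; eauto|]; auto.
      rewrite Rabs_sub_diag; auto.
    + rewrite E. field; auto.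
Qed.

Lemma pdt_comp b F Fu Ft a at0 u t :
  (forall u t, dom b u -> 0 <= t -> dom b (a u t)) -> dom b u -> 0 <= t ->
  (forall x s, dom b x -> 0 <= s -> pdu b F x s (Fu x s)) ->
  (forall x s, dom b x -> 0 <= s -> cont2 b F x s) ->
  pdt F (a u t) t (Ft (a u t) t) ->
  cont2 b Fu (a u t) t -> cont2 b a u t -> pdt a u t at0 ->
  pdt (fun u t => F (a u t) t) u t (Fu (a u t) t * at0 + Ft (a u t) t).
Proof.
  intros Da Du Dt HFd HFc HFt HFu Hac Had.
  unfold pdt.
  apply approx1 with (B := fun h => (a u (t+h) - a u t) / h)
    (C := fun h => (F (a u t) (t+h) - F (a u t) t) / h); [exact Had | exact HFt |].
  intros e He. destruct (HFu e He) as [d1 [Hd1 K1]].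
  generalize (filter_and _ _ (filter_and _ _ (near1_P _) (near1_small _ _ Hd1)) (cont2_slice_t _ _ _ _ Du Hac d1 Hd1)).
  apply filter_imp. intros h [[[Hh0 Dh] Hhs] Hh].
  destruct (mvt b F Fu (t+h) (a u t) (a u (t+h)) Dh (Da u t Du Dt) (Da u (t+h) Du Dh)
     (fun x Dx => HFd x (t+h) Dx Dh) (fun x Dx => HFc x (t+h) Dx Dh)) as [xi [Dxi [Hxi E]]].
  exists (Fu xi (t+h)). split.
  - apply (K1 (xi, t+h)); simpl; auto. eapply Rle_lt_trans; [apply Rmin_Rmax_abs; eauto|]; auto.
    replace (t + h - t) with h by ring; auto.
  - replace (F (a u (t + h)) (t + h) - F (a u t) t) with
      ((F (a u (t + h)) (t + h) - F (a u t) (t+h)) + (F (a u t) (t + h) - F (a u t) t)) by ring.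
    rewrite E. field; auto.
Qed.

Lemma Ck_comp b k F a : Ck b k F -> Ck b k a ->
  (forall u t, dom b u -> 0 <= t -> dom b (a u t)) -> Ck b k (fun u t => F (a u t) t).
Proof.
  revert F a; induction k as [|k IH]; intros F a HF Ha Da.
  - split; auto. intros u t Du Dt. apply cont2_comp; auto.
    + apply (Ck_cont _ _ _ HF); auto.
    + apply (Ck_cont _ _ _ Ha); auto.
  - assert (Ha0 := Ck_S _ _ _ Ha).
    destruct HF as [HcF [Fu [Ft [HdF [HFu HFt]]]]].
    destruct Ha as [Hca [au [at0 [Hda [Hau Hat]]]]].
    split.
    + intros u t Du Dt. apply cont2_comp; auto.
    + exists (fun u t => Fu (a u t) t * au u t), (fun u t => Fu (a u t) t * at0 u t + Ft (a u t) t).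
      split; [|split].
      * intros u t Du Dt. split.
        -- apply pdu_comp; auto.
           ++ intros; apply HdF; auto.
           ++ apply (Ck_cont _ _ _ HFu); auto.
           ++ apply Hda; auto.
        -- apply (pdt_comp b); auto.
           ++ intros; apply HdF; auto.
           ++ apply HdF; auto.
           ++ apply (Ck_cont _ _ _ HFu); auto.
           ++ apply Hda; auto.
      * apply Ck_mult; auto.
      * apply Ck_plus; auto. apply Ck_mult; auto.
Qed.

Lemma Ck_recip b k f : Ck b k f -> (forall u t, dom b u -> 0 <= t -> f u t <> 0) ->
  Ck b k (fun u t => / f u t).
Proof.
  revert f; induction k as [|k IH]; intros f Hf Hnz.
  - split; auto. intros u t Du Dt. refine (tends_inv _ _ _ _ _); [apply Hnz; auto| apply (Ck_cont _ _ _ Hf); auto].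
  - assert (Hf0 := Ck_S _ _ _ Hf).
    destruct Hf as [Hcf [fu [ft [Hdf [Hfu Hft]]]]].
    split.
    + intros u t Du Dt. refine (tends_inv _ _ _ _ (Hcf u t Du Dt)); apply Hnz; auto.
    + exists (fun u t => (-1) * (/ f u t * / f u t) * fu u t),
             (fun u t => (-1) * (/ f u t * / f u t) * ft u t).
      split; [|split].
      * intros u t Du Dt. destruct (Hdf u t Du Dt) as [A1 A2]. split.
        -- unfold pdu. replace ((-1) * (/ f u t * / f u t) * fu u t) with ((-1) * (/ f u t * / f u t) * fu u t + 0) by ring.
           apply approx_tends with (M := fun h => (-1) * (/ f (u+h) t * / f u t))
             (B := fun h => (f (u+h) t - f u t) / h) (C := fun _ => 0); auto.
           ++ refine (tends_scal _ (-1) _ _ (tends_mult _ _ _ _ _ (tends_inv _ _ _ _ (cont2_slice_u _ _ _ _ Dt (Hcf u t Du Dt))) (tends_const _ (/ f u t)))).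
              apply Hnz; auto.
           ++ exact (tends_const _ _).
           ++ generalize (near1_P (Pu b u)). apply filter_imp. intros h [Hh0 Dh].
              assert (f (u+h) t <> 0) by (apply Hnz; auto). assert (f u t <> 0) by (apply Hnz; auto).
              field; auto.
        -- unfold pdt. replace ((-1) * (/ f u t * / f u t) * ft u t) with ((-1) * (/ f u t * / f u t) * ft u t + 0) by ring.
           apply approx_tends with (M := fun h => (-1) * (/ f u (t+h) * / f u t))
             (B := fun h => (f u (t+h) - f u t) / h) (C := fun _ => 0); auto.
           ++ refine (tends_scal _ (-1) _ _ (tends_mult _ _ _ _ _ (tends_inv _ _ _ _ (cont2_slice_t _ _ _ _ Du (Hcf u t Du Dt))) (tends_const _ (/ f u t)))).
              apply Hnz; auto.
           ++ exact (tends_const _ _).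
           ++ generalize (near1_P (Pt t)). apply filter_imp. intros h [Hh0 Dh].
              assert (f u (t+h) <> 0) by (apply Hnz; auto). assert (f u t <> 0) by (apply Hnz; auto).
              field; auto.
      * apply Ck_mult; auto. apply Ck_scal. apply Ck_mult; apply IH; auto.
      * apply Ck_mult; auto. apply Ck_scal. apply Ck_mult; apply IH; auto.
Qed.

Lemma mono_le b (G : R -> R -> R) (t u1 u2 : R) :
  (forall u1 u2, dom b u1 -> dom b u2 -> u1 < u2 -> G u1 t < G u2 t) ->
  dom b u1 -> dom b u2 -> u1 <= u2 -> G u1 t <= G u2 t.
Proof.
  intros Hm D1 D2 H. destruct (Rle_lt_or_eq_dec _ _ H) as [H'|H'].
  - left; apply Hm; auto.
  - subst; lra.
Qed.

Lemma cont_invf b G H z0 t0 :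
  (forall u t, dom b u -> 0 <= t -> cont2 b G u t) ->
  (forall t u1 u2, 0 <= t -> dom b u1 -> dom b u2 -> u1 < u2 -> G u1 t < G u2 t) ->
  (forall z t, dom b z -> 0 <= t -> dom b (H z t) /\ G (H z t) t = z) ->
  dom b z0 -> 0 <= t0 -> cont2 b H z0 t0.
Proof.
  intros HGc Hm HH Dz Dt e He.
  destruct (HH z0 t0 Dz Dt) as [Dh0 Eh0].
  set (h0 := H z0 t0) in *.
  set (xp := h0 + e/2). set (xm := h0 - e/2).
  assert (Dxp : dom b xp) by (apply dom_add; auto; lra).
  assert (Gp : z0 < G xp t0) by (rewrite <- Eh0; apply Hm; auto; unfold xp; lra).
  destruct (classic (dom b xm)) as [Dxm|NDxm].
  - assert (Gm : G xm t0 < z0) by (rewrite <- Eh0; apply Hm; auto; unfold xm; lra).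
    set (d0 := Rmin (G xp t0 - z0) (z0 - G xm t0) / 2).
    assert (Hd0 : 0 < d0) by (unfold d0; apply Rmin_case; lra).
    assert (Hd0a : d0 <= (G xp t0 - z0)/2) by (unfold d0; generalize (Rmin_l (G xp t0 - z0) (z0 - G xm t0)); lra).
    assert (Hd0b : d0 <= (z0 - G xm t0)/2) by (unfold d0; generalize (Rmin_r (G xp t0 - z0) (z0 - G xm t0)); lra).
    destruct (HGc xp t0 Dxp Dt d0 Hd0) as [d1 [Hd1 K1]].
    destruct (HGc xm t0 Dxm Dt d0 Hd0) as [d2 [Hd2 K2]].
    exists (Rmin d0 (Rmin d1 d2)). split; [repeat apply Rmin_pos; auto|].
    intros [z s] Dzs Ds Hz Hs; simpl in *.
    assert (Hz' : Rabs (z - z0) < d0) by (eapply Rlt_le_trans; [exact Hz|]; apply Rmin_l).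
    assert (Hs1 : Rabs (s - t0) < d1) by (eapply Rlt_le_trans; [exact Hs|]; eapply Rle_trans; [apply Rmin_r|apply Rmin_l]).
    assert (Hs2 : Rabs (s - t0) < d2) by (eapply Rlt_le_trans; [exact Hs|]; eapply Rle_trans; [apply Rmin_r|apply Rmin_r]).
    assert (A1 := K1 (xp, s) Dxp Ds ltac:(simpl; rewrite Rabs_sub_diag; auto) Hs1). simpl in A1.
    assert (A2 := K2 (xm, s) Dxm Ds ltac:(simpl; rewrite Rabs_sub_diag; auto) Hs2). simpl in A2.
    destruct (HH z s Dzs Ds) as [Dy Ey].
    apply Rabs_def2 in Hz'. apply Rabs_def2 in A1. apply Rabs_def2 in A2.
    assert (Y1 : H z s < xp).
    { apply Rnot_le_lt. intros C. assert (G xp s <= G (H z s) s) by (apply (mono_le b G s); auto).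
      lra. }
    assert (Y2 : xm < H z s).
    { apply Rnot_le_lt. intros C. assert (G (H z s) s <= G xm s) by (apply (mono_le b G s); auto).
      lra. }
    unfold xp, xm in *. apply Rabs_def1; lra.
  - set (d0 := (G xp t0 - z0) / 2).
    assert (Hd0 : 0 < d0) by (unfold d0; lra).
    destruct (HGc xp t0 Dxp Dt d0 Hd0) as [d1 [Hd1 K1]].
    exists (Rmin d0 d1). split; [repeat apply Rmin_pos; auto|].
    intros [z s] Dzs Ds Hz Hs; simpl in *.
    assert (Hz' : Rabs (z - z0) < d0) by (eapply Rlt_le_trans; [exact Hz|]; apply Rmin_l).
    assert (Hs1 : Rabs (s - t0) < d1) by (eapply Rlt_le_trans; [exact Hs|]; apply Rmin_r).
    assert (A1 := K1 (xp, s) Dxp Ds ltac:(simpl; rewrite Rabs_sub_diag; auto) Hs1). simpl in A1.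
    destruct (HH z s Dzs Ds) as [Dy Ey].
    apply Rabs_def2 in Hz'. apply Rabs_def2 in A1.
    assert (Y1 : H z s < xp).
    { apply Rnot_le_lt. intros C. assert (G xp s <= G (H z s) s) by (apply (mono_le b G s); auto).
      unfold d0 in *. lra. }
    assert (Y2 : xm < H z s).
    { destruct b; simpl in *; [lra | exfalso; auto]. }
    unfold xp, xm in *. apply Rabs_def1; lra.
Qed.

Lemma pdu_invf b G Gu H z t :
  (forall x s, dom b x -> 0 <= s -> pdu b G x s (Gu x s)) ->
  (forall x s, dom b x -> 0 <= s -> cont2 b G x s) ->
  (forall z t, dom b z -> 0 <= t -> dom b (H z t) /\ G (H z t) t = z) ->
  cont2 b Gu (H z t) t -> Gu (H z t) t <> 0 -> cont2 b H z t ->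
  dom b z -> 0 <= t ->
  pdu b H z t (/ Gu (H z t) t).
Proof.
  intros HGd HGc HH HGu Hnz HHc Dz Dt.
  unfold pdu. replace (/ Gu (H z t) t) with (/ Gu (H z t) t * 1 + 0) by ring.
  apply approx1 with (B := fun _ => 1) (C := fun _ => 0); [exact (tends_const _ _) | exact (tends_const _ _) |].
  intros e He. destruct (inv_cont _ Hnz e He) as [d1 [Hd1 K1]].
  destruct (HGu d1 Hd1) as [d2 [Hd2 K2]].
  generalize (filter_and _ _ (near1_P _) (cont2_slice_u _ _ _ _ Dt HHc d2 Hd2)). apply filter_imp.
  intros h [[Hh0 Dh] Hh].
  destruct (HH z t Dz Dt) as [D0 E0]. destruct (HH (z+h) t Dh Dt) as [D1 E1].
  destruct (mvt b G Gu t (H z t) (H (z+h) t) Dt D0 D1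
     (fun x Dx => HGd x t Dx Dt) (fun x Dx => HGc x t Dx Dt)) as [xi [Dxi [Hxi E]]].
  rewrite E0, E1 in E. replace (z + h - z) with h in E by ring.
  assert (Hg : Gu xi t <> 0). { intros C; rewrite C in E; lra. }
  exists (/ Gu xi t). split.
  - apply K1. apply (K2 (xi, t)); simpl; auto.
    + eapply Rle_lt_trans; [apply Rmin_Rmax_abs; eauto|]; auto.
    + rewrite Rabs_sub_diag; auto.
  - set (D := H (z + h) t - H z t) in *.
    assert (HD : D <> 0). { intros C. rewrite C, Rmult_0_r in E. auto. }
    rewrite E. field; split; auto.
Qed.

Lemma pdt_invf b G Gu Gt H z t :
  (forall x s, dom b x -> 0 <= s -> pdu b G x s (Gu x s)) ->
  (forall x s, dom b x -> 0 <= s -> cont2 b G x s) ->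
  (forall x s d, dom b x -> 0 <= s -> pdu b G x s d -> 0 < d) ->
  (forall z t, dom b z -> 0 <= t -> dom b (H z t) /\ G (H z t) t = z) ->
  pdt G (H z t) t (Gt (H z t) t) ->
  cont2 b Gu (H z t) t -> cont2 b H z t ->
  dom b z -> 0 <= t ->
  pdt H z t (- / Gu (H z t) t * Gt (H z t) t).
Proof.
  intros HGd HGc Hpos HH HGt HGu HHc Dz Dt.
  destruct (HH z t Dz Dt) as [D0 E0].
  assert (Hnz : Gu (H z t) t <> 0) by (apply Rgt_not_eq, (Hpos (H z t) t); auto).
  unfold pdt. replace (- / Gu (H z t) t * Gt (H z t) t) with (- / Gu (H z t) t * Gt (H z t) t + 0) by ring.
  apply approx1 with (B := fun h => (G (H z t) (t+h) - G (H z t) t) / h) (C := fun _ => 0);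
    [exact HGt | exact (tends_const _ _) |].
  intros e He. destruct (inv_cont _ Hnz e He) as [d1 [Hd1 K1]].
  destruct (HGu d1 Hd1) as [d2 [Hd2 K2]].
  generalize (filter_and _ _ (filter_and _ _ (near1_P _) (near1_small _ _ Hd2)) (cont2_slice_t _ _ _ _ Dz HHc d2 Hd2)).
  apply filter_imp. intros h [[[Hh0 Dh] Hhs] Hh].
  destruct (HH z (t+h) Dz Dh) as [D1 E1].
  destruct (mvt b G Gu (t+h) (H z t) (H z (t+h)) Dh D0 D1
     (fun x Dx => HGd x (t+h) Dx Dh) (fun x Dx => HGc x (t+h) Dx Dh)) as [xi [Dxi [Hxi E]]].
  assert (Hg : 0 < Gu xi (t+h)) by (apply (Hpos xi (t+h)); auto).
  exists (- / Gu xi (t+h)). split.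
  - replace (- / Gu xi (t + h) - - / Gu (H z t) t) with (/ Gu (H z t) t - / Gu xi (t + h)) by ring.
    rewrite Rabs_minus_sym. apply K1. apply (K2 (xi, t+h)); simpl; auto.
    + eapply Rle_lt_trans; [apply Rmin_Rmax_abs; eauto|]; auto.
    + replace (t + h - t) with h by ring; auto.
  - assert (Z : G (H z (t+h)) (t+h) - G (H z t) t = 0) by (rewrite E0, E1; ring).
    replace (G (H z (t+h)) (t+h) - G (H z t) t) with
      ((G (H z (t+h)) (t+h) - G (H z t) (t+h)) + (G (H z t) (t+h) - G (H z t) t)) in Z by ring.
    rewrite E in Z.
    replace (G (H z t) (t + h) - G (H z t) t) with (- (Gu xi (t + h) * (H z (t + h) - H z t))) by lra.
    field. split; auto; lra.
Qed.

Lemma Ck_invf b k G H : Ck b k G ->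
  (forall t u1 u2, 0 <= t -> dom b u1 -> dom b u2 -> u1 < u2 -> G u1 t < G u2 t) ->
  (forall z t, dom b z -> 0 <= t -> dom b (H z t) /\ G (H z t) t = z) ->
  (forall x s d, dom b x -> 0 <= s -> pdu b G x s d -> 0 < d) ->
  Ck b k H.
Proof.
  intros HG Hm HH Hpos.
  assert (HGc := Ck_cont _ _ _ HG).
  assert (Hc : forall z t, dom b z -> 0 <= t -> cont2 b H z t).
  { intros; apply (cont_invf b G H); auto. }
  induction k as [|k IH].
  - split; auto.
  - assert (HG0 := Ck_S _ _ _ HG). specialize (IH HG0).
    destruct HG as [_ [Gu [Gt [HGd [HGu HGt]]]]].
    assert (Hnz : forall z t, dom b z -> 0 <= t -> Gu (H z t) t <> 0).
    { intros z t Dz Dt. destruct (HH z t Dz Dt) as [D0 _].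
      apply Rgt_not_eq, (Hpos (H z t) t); auto. apply HGd; auto. }
    assert (HDH : forall z t, dom b z -> 0 <= t -> dom b (H z t)) by (intros; apply HH; auto).
    split; auto.
    exists (fun z t => / Gu (H z t) t), (fun z t => - / Gu (H z t) t * Gt (H z t) t).
    split; [|split].
    + intros z t Dz Dt. destruct (HH z t Dz Dt) as [D0 _]. split.
      * apply pdu_invf with G; auto.
        -- intros; apply HGd; auto.
        -- apply (Ck_cont _ _ _ HGu); auto.
      * apply pdt_invf with b G; auto.
        -- intros; apply HGd; auto.
        -- apply HGd; auto.
        -- apply (Ck_cont _ _ _ HGu); auto.
    + apply Ck_recip; auto. apply Ck_comp; auto.
    + apply Ck_ext with (fun z t => (-1) * (/ Gu (H z t) t) * Gt (H z t) t).
      { intros; ring. }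
      apply Ck_mult. apply Ck_scal. apply Ck_recip; auto. apply Ck_comp; auto.
      apply Ck_comp; auto.
Qed.

Lemma within0_tends (P : R -> Prop) (f : R -> R) (v : R) :
  filterlim f (within P (locally 0)) (locally v) <-> tends (near1 P) f v.
Proof.
  split.
  - intros H e He. destruct (proj1 (filterlim_locally f v) H (mkposreal e He)) as [d Hd].
    exists d; split; [apply cond_pos|]. intros h Hh Ph. apply Hd; auto.
    change (Rabs (h - 0) < d). rewrite Rminus_0_r; auto.
  - intros H. apply filterlim_locally. intros e.
    destruct (H e (cond_pos e)) as [d [Hd K]]. exists (mkposreal d Hd). intros h Hh Ph.
    apply K; auto. change (Rabs (h - 0) < d) in Hh. rewrite Rminus_0_r in Hh; auto.
Qed.

Lemma quad_cont2 g u t :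
  filterlim (fun p : R * R => g (fst p) (snd p)) (within quad (locally (u, t))) (locally (g u t))
  <-> cont2 true g u t.
Proof.
  split.
  - intros H e He.
    destruct (proj1 (filterlim_locally (fun p : R * R => g (fst p) (snd p)) (g u t)) H (mkposreal e He)) as [d Hd].
    exists d; split; [apply cond_pos|]. intros p D1 D2 H1 H2. apply Hd; [split; auto|split; auto].
  - intros H. apply filterlim_locally. intros e.
    destruct (H e (cond_pos e)) as [d [Hd K]]. exists (mkposreal d Hd). intros p [H1 H2] [D1 D2].
    apply K; auto.
Qed.

Lemma pderiv_u_pdu g u t v : pderiv_u g u t v <-> pdu true g u t v.
Proof. apply within0_tends. Qed.
Lemma pderiv_t_pdt g u t v : pderiv_t g u t v <-> pdt g u t v.
Proof. apply within0_tends. Qed.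

Lemma quadD_Ck q : forall (g : R -> R -> R) (D : list bool -> R -> R -> R),
  (forall u t, 0 <= u -> 0 <= t -> D nil u t = g u t) ->
  (forall l u t, (length l < q)%nat -> 0 <= u -> 0 <= t ->
        pderiv_u (D l) u t (D (true :: l) u t) /\
        pderiv_t (D l) u t (D (false :: l) u t)) ->
  (forall l u t, (length l <= q)%nat -> 0 <= u -> 0 <= t ->
        filterlim (fun p : R * R => D l (fst p) (snd p))
          (within quad (locally (u, t))) (locally (D l u t))) ->
  Ck true q g.
Proof.
  induction q as [|q IH]; intros g D H0 Hd Hc; apply Ck_ext with (D nil); auto.
  - split; auto. intros u t Du Dt. apply quad_cont2. apply Hc; simpl; auto.
  - split.
    + intros u t Du Dt. apply quad_cont2. apply Hc; simpl; auto; lia.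
    + exists (D (true :: nil)), (D (false :: nil)). split; [|split].
      * intros u t Du Dt. destruct (Hd nil u t) as [A B]; simpl; auto; try lia.
        split; [apply pderiv_u_pdu|apply pderiv_t_pdt]; auto.
      * apply (IH _ (fun l => D (l ++ true :: nil))); auto.
        -- intros l u t Hl Du Dt. apply (Hd (l ++ true :: nil)); auto.
           rewrite length_app; simpl; lia.
        -- intros l u t Hl Du Dt. apply (Hc (l ++ true :: nil)); auto.
           rewrite length_app; simpl; lia.
      * apply (IH _ (fun l => D (l ++ false :: nil))); auto.
        -- intros l u t Hl Du Dt. apply (Hd (l ++ false :: nil)); auto.
           rewrite length_app; simpl; lia.
        -- intros l u t Hl Du Dt. apply (Hc (l ++ false :: nil)); auto.
           rewrite length_app; simpl; lia.
Qed.

Lemma Cq_quad_Ck q g : Cq_quad q g -> Ck true q g.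
Proof. intros [_ [D [H0 [Hd Hc]]]]. eapply quadD_Ck; eauto. Qed.

Fixpoint mkD (g : R -> R -> R) (l : list bool) : R -> R -> R :=
  match l with
  | nil => g
  | b :: l' => epsilon (inhabits (fun _ _ : R => 0))
      (fun Gd => forall u t, 0 <= u -> 0 <= t ->
         if b then pdu true (mkD g l') u t (Gd u t) else pdt (mkD g l') u t (Gd u t))
  end.

Lemma mkD_Ck q g : Ck true q g -> forall l, (length l <= q)%nat ->
  Ck true (q - length l) (mkD g l).
Proof.
  intros Hg l. induction l as [|b l IH]; intros Hl; simpl.
  - rewrite Nat.sub_0_r; auto.
  - simpl in Hl. specialize (IH ltac:(lia)).
    replace (q - length l)%nat with (S (q - S (length l))) in IH by lia.
    destruct IH as [_ [Fu [Ft [HD [HFu HFt]]]]].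
    destruct b.
    + match goal with |- Ck _ _ (epsilon ?i ?P) => assert (S : P (epsilon i P)) end.
      { apply epsilon_spec. exists Fu. intros u t Du Dt. apply HD; auto. }
      apply Ck_ext with Fu; auto. intros u t Du Dt.
      apply (pdu_unique true (mkD g l) u t); auto. apply HD; auto.
    + match goal with |- Ck _ _ (epsilon ?i ?P) => assert (S : P (epsilon i P)) end.
      { apply epsilon_spec. exists Ft. intros u t Du Dt. apply HD; auto. }
      apply Ck_ext with Ft; auto. intros u t Du Dt.
      apply (pdt_unique (mkD g l) u t); auto. apply HD; auto.
Qed.

Lemma Ck_Cq_quad q g : (forall u t, 0 <= u -> 0 <= t -> 0 <= g u t) -> Ck true q g -> Cq_quad q g.
Proof.
  intros Hpos Hg. split; auto. exists (mkD g). split; [|split].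
  - reflexivity.
  - intros l u t Hl Du Dt.
    assert (H := mkD_Ck q g Hg l ltac:(lia)).
    replace (q - length l)%nat with (S (q - S (length l))) in H by lia.
    destruct H as [_ [Fu [Ft [HD _]]]].
    split.
    + apply pderiv_u_pdu. simpl.
      match goal with |- pdu _ _ _ _ (epsilon ?i ?P _ _) => assert (S : P (epsilon i P)) end.
      { apply epsilon_spec. exists Fu. intros u' t' Du' Dt'. apply HD; auto. }
      apply S; auto.
    + apply pderiv_t_pdt. simpl.
      match goal with |- pdt _ _ _ (epsilon ?i ?P _ _) => assert (S : P (epsilon i P)) end.
      { apply epsilon_spec. exists Ft. intros u' t' Du' Dt'. apply HD; auto. }
      apply S; auto.
  - intros l u t Hl Du Dt. apply quad_cont2.
    apply (Ck_cont _ _ _ (mkD_Ck q g Hg l Hl)); auto.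
Qed.

Lemma is_derive_pdu f x t l : is_derive f x l <-> pdu false (fun u _ => f u) x t l.
Proof.
  rewrite is_derive_Reals. split.
  - intros H e He. destruct (H e He) as [d Hd]. exists d; split; [apply cond_pos|].
    intros h Hh [Hh0 _]. apply Hd; auto.
  - intros H e He. destruct (H e He) as [d [Hd K]]. exists (mkposreal d Hd).
    intros h Hh0 Hh. apply K; auto. split; simpl; auto.
Qed.

Lemma continuous_cont2 f x t : 0 <= t -> continuous f x <-> cont2 false (fun u _ => f u) x t.
Proof.
  intros Ht. split.
  - intros H e He. destruct (proj1 (filterlim_locally f (f x)) H (mkposreal e He)) as [d Hd].
    exists d; split; [apply cond_pos|]. intros p _ _ Hp _. apply Hd. exact Hp.
  - intros H. apply filterlim_locally. intros e.
    destruct (H e (cond_pos e)) as [d [Hd K]]. exists (mkposreal d Hd). intros y Hy.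
    apply (K (y, t)); simpl; auto; try exact Hy; rewrite Rabs_sub_diag; auto.
Qed.

Lemma CqR_Ck q f : Cq_R q f -> Ck false q (fun u _ => f u).
Proof.
  intros [Hex Hc].
  assert (forall m k, (k + m = q)%nat -> Ck false m (fun u _ => Derive_n f k u)).
  { induction m as [|m IH]; intros k Hk.
    - rewrite Nat.add_0_r in Hk; subst k. split; auto. intros u t _ Dt.
      apply (continuous_cont2 (Derive_n f q) u t Dt); auto.
    - split.
      + intros u t _ Dt. apply (continuous_cont2 (Derive_n f k) u t Dt).
        exact (ex_derive_continuous (Derive_n f k) u (Hex (S k) u ltac:(lia))).
      + exists (fun u _ => Derive_n f (S k) u), (fun _ _ => 0). split; [|split].
        * intros u t _ Dt. split.
          -- apply (is_derive_pdu (Derive_n f k)). apply Derive_correct. apply (Hex (S k)); lia.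
          -- apply pdt_cst with (Derive_n f k u); auto.
        * apply IH; lia.
        * apply Ck_const. }
  apply Ck_ext with (fun u _ => Derive_n f 0 u); auto.
Qed.

Lemma Ck_CqR q : forall f, Ck false q (fun u _ => f u) -> Cq_R q f.
Proof.
  induction q as [|q IH]; intros f Hf.
  - split.
    + intros k x Hk. replace k with 0%nat by lia. simpl; auto.
    + intros x. apply (continuous_cont2 _ x 0 (Rle_refl 0)). apply (Ck_cont _ _ _ Hf); simpl; auto; lra.
  - destruct Hf as [Hc [Fu [Ft [HD [HFu _]]]]].
    set (f1 := fun u => Fu u 0).
    assert (Hd : forall x, is_derive f x (f1 x)).
    { intros x. apply (is_derive_pdu f x 0). apply HD; simpl; auto; lra. }
    assert (E : forall u t, dom false u -> 0 <= t -> Fu u t = f1 u).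
    { intros u t Du Dt. apply (pdu_unique false (fun u _ => f u) u t); auto. apply HD; auto.
      apply (is_derive_pdu f u t). apply Hd. }
    assert (H1 : Ck false q (fun u _ => f1 u)) by (apply Ck_ext with Fu; auto).
    destruct (IH f1 H1) as [Hex1 Hc1].
    assert (DE : forall j x, Derive_n f (S j) x = Derive_n f1 j x).
    { induction j as [|j IHj]; intros x; simpl.
      - apply is_derive_unique, Hd.
      - apply Derive_ext. intros y. apply IHj. }
    split.
    + intros k x Hk. destruct k as [|k]; simpl; auto.
      destruct k as [|k].
      * simpl. exists (f1 x). apply Hd.
      * apply ex_derive_ext with (Derive_n f1 k). { intros y; symmetry; apply DE. }
        apply (Hex1 (S k)); lia.
    + intros x. apply continuous_ext with (Derive_n f1 q). { intros y; symmetry; apply DE. }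
      apply Hc1.
Qed.

Lemma sumR_ext n a b : (forall j, (1 <= j <= n)%nat -> a j = b j) -> sumR n a = sumR n b.
Proof.
  induction n; intros H; simpl; auto. rewrite IHn, (H (S n)); auto; intros; try apply H; lia.
Qed.

Lemma sumR_le n a b : (forall j, (1 <= j <= n)%nat -> a j <= b j) -> sumR n a <= sumR n b.
Proof.
  induction n; intros H; simpl; [lra|]. apply Rplus_le_compat. apply IHn; intros; apply H; lia. apply H; lia.
Qed.

Lemma sumR_plus n a b : sumR n (fun j => a j + b j) = sumR n a + sumR n b.
Proof. induction n; simpl; [ring|]. rewrite IHn; ring. Qed.

Lemma sumR_scal n c a : sumR n (fun j => c * a j) = c * sumR n a.
Proof. induction n; simpl; [ring|]. rewrite IHn; ring. Qed.

Lemma sumR_minus n a b : sumR n (fun j => a j - b j) = sumR n a - sumR n b.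
Proof. induction n; simpl; [ring|]. rewrite IHn; ring. Qed.

Lemma sumR_0 n : sumR n (fun _ => 0) = 0.
Proof. induction n; simpl; [ring|]. rewrite IHn; ring. Qed.

Lemma sumR_nonneg n a : (forall j, (1 <= j <= n)%nat -> 0 <= a j) -> 0 <= sumR n a.
Proof. intros H. rewrite <- (sumR_0 n). apply sumR_le; auto. Qed.

Lemma sumRbar_ext n a b : (forall j, (1 <= j <= n)%nat -> a j = b j) -> sumRbar n a = sumRbar n b.
Proof.
  induction n; intros H; simpl; auto. rewrite IHn, (H (S n)); auto; intros; try apply H; lia.
Qed.

Lemma sumRbar_fin n (g : nat -> Rbar) :
  (forall i, (1 <= i <= n)%nat -> Rbar_le 0 (g i)) -> sumRbar n g <> p_infty ->
  exists s : nat -> R, (forall i, (1 <= i <= n)%nat -> g i = Finite (s i)) /\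
     sumRbar n g = Finite (sumR n s) /\ 0 <= sumR n s.
Proof.
  induction n as [|n IH]; intros Hpos Hf.
  - exists (fun _ => 0). split; [intros; lia|]. simpl; split; auto; lra.
  - simpl in Hf.
    assert (Hg := Hpos (S n) ltac:(lia)).
    destruct (sumRbar n g) as [a| |] eqn:Ea.
    + destruct IH as [s [Hs [Es Hs0]]]; [intros; apply Hpos; lia| try rewrite Ea; discriminate|].
      try rewrite Ea in Es. injection Es as Es.
      destruct (g (S n)) as [c| |] eqn:Ec.
      * exists (fun i => if Nat.eqb i (S n) then c else s i). split; [|split].
        -- intros i Hi. destruct (Nat.eqb_spec i (S n)); [subst; auto|]. apply Hs; lia.
        -- simpl. rewrite Nat.eqb_refl. rewrite (sumR_ext n _ s).
           ++ rewrite Ea, Ec, <- Es. reflexivity.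
           ++ intros j Hj. destruct (Nat.eqb_spec j (S n)); [lia|auto].
        -- simpl. rewrite Nat.eqb_refl. rewrite (sumR_ext n _ s).
           ++ simpl in Hg. lra.
           ++ intros j Hj. destruct (Nat.eqb_spec j (S n)); [lia|auto].
      * exfalso; apply Hf; reflexivity.
      * simpl in Hg; contradiction.
    + exfalso. destruct (g (S n)) as [c| |]; try (apply Hf; reflexivity). simpl in Hg; contradiction.
    + exfalso. destruct IH as [s [Hs [Es Hs0]]]; [intros; apply Hpos; lia| try rewrite Ea; discriminate|].
      try rewrite Ea in Es; discriminate.
Qed.

Lemma Rbar_mult_pos_fin x r y : 0 < x -> Rbar_le 0 r -> Rbar_mult (Finite x) r = Finite y ->
  exists z, r = Finite z /\ y = x * z /\ 0 <= z.
Proof.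
  intros Hx Hr E. destruct r as [z| |].
  - exists z. simpl in E. injection E as E. simpl in Hr. auto.
  - exfalso. unfold Rbar_mult, Rbar_mult' in E.
    destruct (Rle_dec 0 x); [|lra]. destruct (Rle_lt_or_eq_dec 0 x r); [discriminate|lra].
  - simpl in Hr; contradiction.
Qed.

Lemma Rbar_mult_pos_pinf x r : 0 < x -> Rbar_mult (Finite x) r = p_infty -> r = p_infty.
Proof.
  intros Hx E. destruct r as [z| |]; auto; simpl in E; try discriminate.
  unfold Rbar_mult, Rbar_mult' in E.
  destruct (Rle_dec 0 x); [|lra]. destruct (Rle_lt_or_eq_dec 0 x r); discriminate.
Qed.

Lemma Rbar_le_mult_pos x r : 0 < x -> Rbar_le 0 r -> Rbar_le 0 (Rbar_mult (Finite x) r).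
Proof.
  intros Hx Hr. destruct r as [z| |]; simpl in *.
  - apply Rmult_le_pos; lra.
  - unfold Rbar_mult, Rbar_mult'.
    destruct (Rle_dec 0 x); [|lra]. destruct (Rle_lt_or_eq_dec 0 x r); simpl; auto. lra.
  - contradiction.
Qed.

Lemma classC_cont2 g u t : 0 <= u -> classC g -> cont2 true (fun u _ => g u) u t.
Proof.
  intros Hu [_ [_ [Hc _]]] e He.
  destruct (proj1 (filterlim_locally g (g u)) (Hc u Hu) (mkposreal e He)) as [d Hd].
  exists d; split; [apply cond_pos|]. intros p D1 D2 H1 H2. apply Hd; auto.
Qed.

Lemma classC_Ck0 g : classC g -> Ck true 0 (fun u _ => g u).
Proof. intros H. split; auto. intros; apply classC_cont2; auto. Qed.

Lemma cont2_Rp (F : R -> R -> R) u t : 0 <= t -> cont2 true F u t ->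
  filterlim (fun x => F x t) (within Rp (locally u)) (locally (F u t)).
Proof.
  intros Ht H. apply filterlim_locally. intros e.
  destruct (H e (cond_pos e)) as [d [Hd K]]. exists (mkposreal d Hd). intros y Hy Py.
  apply (K (y, t)); simpl; auto; try exact Hy; rewrite Rabs_sub_diag; auto.
Qed.

Lemma Rmax_lip x y : Rabs (Rmax 0 y - Rmax 0 x) <= Rabs (y - x).
Proof.
  unfold Rmax. destruct (Rle_dec 0 y); destruct (Rle_dec 0 x);
  unfold Rabs; repeat destruct Rcase_abs; lra.
Qed.

Lemma IVT_Rp (g : R -> R) U z : (forall u, 0 <= u -> cont2 true (fun u _ => g u) u 0) ->
  0 <= U -> g 0 <= z <= g U -> exists u, 0 <= u <= U /\ g u = z.
Proof.
  intros Hc HU Hz.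
  assert (Hcont : continuity (fun x => g (Rmax 0 x))).
  { intros x. apply continuity_pt_filterlim. apply filterlim_locally. intros e.
    destruct (Hc (Rmax 0 x) (Rmax_l _ _) e (cond_pos e)) as [d [Hd K]].
    exists (mkposreal d Hd). intros y Hy.
    apply (K (Rmax 0 y, 0)); simpl; auto using Rmax_l; try lra.
    eapply Rle_lt_trans; [apply Rmax_lip|]. exact Hy. rewrite Rabs_sub_diag; auto. }
  assert (E0 : Rmax 0 0 = 0) by (apply Rmax_left; lra).
  assert (EU : Rmax 0 U = U) by (apply Rmax_right; lra).
  destruct (IVT_gen _ 0 U z Hcont) as [x [Hx Ex]].
  - rewrite E0, EU. unfold Rmin, Rmax; destruct Rle_dec; lra.
  - exists (Rmax 0 x). rewrite Rmin_left, Rmax_right in Hx by lra. split; auto.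
    split; [apply Rmax_l|]. apply Rmax_lub; lra.
Qed.

Section PerT.
Variable I : nat.
Variable f : nat -> R -> R.
Hypothesis Hf : inF I f.

Lemma fC i : (1 <= i <= I)%nat -> classC (f i).
Proof. intros; apply Hf; auto. Qed.

Lemma f0 i : (1 <= i <= I)%nat -> f i 0 = 0.
Proof. intros H; apply (fC i H). Qed.
Lemma fpos i u : (1 <= i <= I)%nat -> 0 <= u -> 0 <= f i u.
Proof. intros H; apply (fC i H). Qed.
Lemma fmono i u1 u2 : (1 <= i <= I)%nat -> 0 <= u1 -> u1 <= u2 -> f i u1 <= f i u2.
Proof. intros H; apply (fC i H). Qed.

Lemma phi_0 i : phi I f i 0 = 0.
Proof.
  unfold phi. rewrite (sumR_ext _ _ (fun _ => 0)). rewrite sumR_0; ring.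
  intros j Hj. rewrite f0; auto; ring.
Qed.

Lemma phi_Ck0 i : Ck true 0 (fun u _ => phi I f i u).
Proof.
  unfold phi. apply Ck_minus. apply Ck_u.
  apply (Ck_sumR true 0 I (fun j u _ => 2 * INR (Nat.min i j) * f j u)).
  intros j Hj. apply Ck_scal. apply classC_Ck0, fC; auto.
Qed.

Lemma phi_inc_rel i u1 u2 : (i <= I)%nat -> 0 <= u1 -> u1 <= u2 ->
  phi I f I u2 - phi I f I u1 <= phi I f i u2 - phi I f i u1.
Proof.
  intros Hi H1 H2. unfold phi.
  assert (sumR I (fun j => 2 * INR (Nat.min i j) * f j u2) - sumR I (fun j => 2 * INR (Nat.min i j) * f j u1)
     <= sumR I (fun j => 2 * INR (Nat.min I j) * f j u2) - sumR I (fun j => 2 * INR (Nat.min I j) * f j u1)).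
  { rewrite <- !sumR_minus. apply sumR_le. intros j Hj.
    assert (INR (Nat.min i j) <= INR (Nat.min I j)) by (apply le_INR; lia).
    assert (0 <= f j u2 - f j u1) by (generalize (fmono j u1 u2 Hj H1 H2); lra).
    assert (0 <= INR (Nat.min i j)) by apply pos_INR.
    replace (2 * INR (Nat.min I j) * f j u2 - 2 * INR (Nat.min I j) * f j u1) with
      (2 * INR (Nat.min I j) * (f j u2 - f j u1)) by ring.
    replace (2 * INR (Nat.min i j) * f j u2 - 2 * INR (Nat.min i j) * f j u1) with
      (2 * INR (Nat.min i j) * (f j u2 - f j u1)) by ring.
    apply Rmult_le_compat_r; lra. }
  lra.
Qed.

Lemma phi_le_id i u1 u2 : 0 <= u1 -> u1 <= u2 -> phi I f i u2 - phi I f i u1 <= u2 - u1.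
Proof.
  intros H1 H2. unfold phi.
  assert (0 <= sumR I (fun j => 2 * INR (Nat.min i j) * f j u2) - sumR I (fun j => 2 * INR (Nat.min i j) * f j u1)).
  { rewrite <- sumR_minus. apply sumR_nonneg. intros j Hj.
    assert (0 <= f j u2 - f j u1) by (generalize (fmono j u1 u2 Hj H1 H2); lra).
    assert (0 <= INR (Nat.min i j)) by apply pos_INR.
    replace (2 * INR (Nat.min i j) * f j u2 - 2 * INR (Nat.min i j) * f j u1) with
      (2 * INR (Nat.min i j) * (f j u2 - f j u1)) by ring.
    apply Rmult_le_pos; lra. }
  lra.
Qed.

Lemma phi_strict i u1 u2 : (i <= I)%nat -> 0 <= u1 -> u1 < u2 -> phi I f i u1 < phi I f i u2.
Proof.
  intros Hi H1 H2. destruct Hf as [_ [_ [Hs _]]].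
  assert (A := Hs u1 u2 H1 H2). assert (B := phi_inc_rel i u1 u2 Hi H1 (Rlt_le _ _ H2)). lra.
Qed.

Lemma phi_nonneg i u : (i <= I)%nat -> 0 <= u -> 0 <= phi I f i u.
Proof.
  intros Hi Hu. destruct (Req_dec u 0) as [->|Hn]. rewrite phi_0; lra.
  rewrite <- (phi_0 i). left. apply phi_strict; auto; lra.
Qed.

Lemma phi_surj i z : (i <= I)%nat -> 0 <= z -> exists u, 0 <= u /\ phi I f i u = z.
Proof.
  intros Hi Hz. destruct Hf as [_ [_ [_ Hl]]].
  apply is_lim_spec in Hl. destruct (Hl z) as [N HN].
  set (U := Rmax 0 N + 1).
  assert (HU : 0 <= U) by (unfold U; generalize (Rmax_l 0 N); lra).
  assert (HzU : z < phi I f I U) by (apply HN; unfold U; generalize (Rmax_r 0 N); lra).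
  assert (HzU' : phi I f I U <= phi I f i U).
  { generalize (phi_inc_rel i 0 U Hi (Rle_refl 0) HU). rewrite !phi_0. lra. }
  destruct (IVT_Rp (phi I f i) U z) as [u [Hu Eu]]; auto.
  - intros u Hu. apply (Ck_cont _ _ _ (phi_Ck0 i)); simpl; auto; lra.
  - rewrite phi_0; lra.
  - exists u; split; [lra|auto].
Qed.

Lemma inv_spec i z : (i <= I)%nat -> 0 <= z ->
  0 <= inv_Rp (phi I f i) z /\ phi I f i (inv_Rp (phi I f i) z) = z.
Proof.
  intros Hi Hz. unfold inv_Rp. apply epsilon_spec. apply phi_surj; auto.
Qed.

Lemma phi_inj i u1 u2 : (i <= I)%nat -> 0 <= u1 -> 0 <= u2 -> phi I f i u1 = phi I f i u2 -> u1 = u2.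
Proof.
  intros Hi H1 H2 E. destruct (Rtotal_order u1 u2) as [L|[L|L]]; auto.
  - apply (phi_strict i) in L; auto; lra.
  - apply (phi_strict i) in L; auto; lra.
Qed.

Lemma inv_phi i u : (i <= I)%nat -> 0 <= u -> inv_Rp (phi I f i) (phi I f i u) = u.
Proof.
  intros Hi Hu. destruct (inv_spec i (phi I f i u) Hi (phi_nonneg i u Hi Hu)) as [A B].
  apply (phi_inj i); auto.
Qed.

Lemma Ups_phi i u : (i <= I)%nat -> 0 <= u -> Upsilon I f i (phi I f i u) = f i u.
Proof. intros Hi Hu. unfold Upsilon. rewrite inv_phi; auto. Qed.

Lemma sup_eq i : (1 <= i <= I)%nat -> supq I f i = supbar (Upsilon I f i).
Proof.
  intros Hi. unfold supq, supbar. apply Lub_Rbar_eqset. intros r. split.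
  - intros [u1 [u2 [H1 [H2 [H3 ->]]]]].
    exists (phi I f i u1), (phi I f i u2). split; [apply phi_nonneg; auto; lia|].
    split; [apply phi_nonneg; auto; lia|]. split.
    + intros E. apply H3. apply (phi_inj i); auto; lia.
    + rewrite !Ups_phi; auto; lia.
  - intros [z1 [z2 [H1 [H2 [H3 ->]]]]].
    destruct (inv_spec i z1 ltac:(lia) H1) as [A1 B1].
    destruct (inv_spec i z2 ltac:(lia) H2) as [A2 B2].
    exists (inv_Rp (phi I f i) z1), (inv_Rp (phi I f i) z2). split; auto. split; auto. split.
    + intros E. apply H3. rewrite <- B1, <- B2, E; auto.
    + unfold Upsilon. rewrite B1, B2. auto.
Qed.

Lemma Ups_classC_part i : (1 <= i <= I)%nat ->
  Upsilon I f i 0 = 0 /\ (forall z, 0 <= z -> 0 <= Upsilon I f i z) /\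
  (forall z1 z2, 0 <= z1 -> z1 <= z2 -> Upsilon I f i z1 <= Upsilon I f i z2).
Proof.
  intros Hi. split; [|split].
  - rewrite <- (phi_0 i) at 1. rewrite Ups_phi; [apply f0; auto|lia|lra].
  - intros z Hz. unfold Upsilon. apply fpos; auto. apply inv_spec; auto; lia.
  - intros z1 z2 H1 H2. unfold Upsilon.
    destruct (inv_spec i z1 ltac:(lia) H1) as [A1 B1].
    destruct (inv_spec i z2 ltac:(lia) ltac:(lra)) as [A2 B2].
    apply fmono; auto.
    destruct (Rle_dec (inv_Rp (phi I f i) z1) (inv_Rp (phi I f i) z2)) as [L|L]; auto.
    exfalso. apply Rnot_le_lt in L. apply (phi_strict i) in L; auto; [|lia]. lra.
Qed.

End PerT.

Lemma supq_nonneg I f i : inF I f -> (1 <= i <= I)%nat -> Rbar_le 0 (supq I f i).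
Proof.
  intros Hf Hi. destruct (Lub_Rbar_correct (fun r => exists u1 u2, 0 <= u1 /\ 0 <= u2 /\ u1 <> u2 /\
     r = (f i u1 - f i u2) / (phi I f i u1 - phi I f i u2))) as [Hub _].
  unfold supq. eapply Rbar_le_trans; [|apply Hub].
  2:{ exists 1, 0. split; [lra|]. split; [lra|]. split; [lra|]. reflexivity. }
  simpl. apply Rmult_le_pos.
  - generalize (fmono I f Hf i 0 1 Hi ltac:(lra) ltac:(lra)). lra.
  - apply Rlt_le, Rinv_0_lt_compat. generalize (phi_strict I f Hf i 0 1 ltac:(lia) ltac:(lra) ltac:(lra)). lra.
Qed.

Lemma D_eps I f : inF I f ->
  Rbar_lt (sumRbar I (fun i => Rbar_mult (INR i) (supq I f i))) (Finite (1/2)) ->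
  exists eps, 0 < eps <= 1 /\ forall i, (1 <= i <= I)%nat -> forall u1 u2, 0 <= u1 -> u1 <= u2 ->
    eps * (u2 - u1) <= phi I f i u2 - phi I f i u1.
Proof.
  intros Hf Hlt.
  assert (Hpos : forall i, (1 <= i <= I)%nat -> Rbar_le 0 (Rbar_mult (INR i) (supq I f i))).
  { intros i Hi. apply Rbar_le_mult_pos. apply lt_0_INR; lia. apply supq_nonneg; auto. }
  destruct (sumRbar_fin I _ Hpos) as [s [Hs [Es Hs0]]].
  { intros E; rewrite E in Hlt; simpl in Hlt; auto. }
  rewrite Es in Hlt; simpl in Hlt.
  assert (Hz : forall i, (1 <= i <= I)%nat -> exists z, supq I f i = Finite z /\ s i = INR i * z /\ 0 <= z).
  { intros i Hi. apply Rbar_mult_pos_fin. apply lt_0_INR; lia. apply supq_nonneg; auto. apply Hs; auto. }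
  exists (1 - 2 * sumR I s). split; [lra|].
  intros i Hi u1 u2 H1 H2.
  assert (HJ : forall j, (1 <= j <= I)%nat -> 2 * INR (Nat.min i j) * (f j u2 - f j u1) <= 2 * s j * (u2 - u1)).
  { intros j Hj. destruct (Hz j Hj) as [z [Ez [Esz Hz0]]]. rewrite Esz.
    assert (Hd : f j u2 - f j u1 <= z * (u2 - u1)).
    { destruct (Req_dec u1 u2) as [<-|Hne].
      - unfold Rminus; rewrite !Rplus_opp_r; lra.
      - assert (Hp : 0 < phi I f j u2 - phi I f j u1).
        { generalize (phi_strict I f Hf j u1 u2 ltac:(lia) H1 ltac:(lra)); lra. }
        assert (Hr : (f j u2 - f j u1) / (phi I f j u2 - phi I f j u1) <= z).
        { destruct (Lub_Rbar_correct (fun r => exists u1 u2, 0 <= u1 /\ 0 <= u2 /\ u1 <> u2 /\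
             r = (f j u1 - f j u2) / (phi I f j u1 - phi I f j u2))) as [Hub _].
          change (Rbar_le (Finite ((f j u2 - f j u1) / (phi I f j u2 - phi I f j u1))) (Finite z)).
          unfold supq in Ez. rewrite <- Ez. apply Hub. exists u2, u1. split; [lra|]. split; [lra|].
          split; auto. }
        assert (Hq : f j u2 - f j u1 <= z * (phi I f j u2 - phi I f j u1)).
        { apply (Rmult_le_compat_r (phi I f j u2 - phi I f j u1)) in Hr; [|lra].
          unfold Rdiv in Hr. rewrite Rmult_assoc, Rinv_l, Rmult_1_r in Hr; lra. }
        assert (Hl := phi_le_id I f Hf j u1 u2 H1 H2).
        assert (z * (phi I f j u2 - phi I f j u1) <= z * (u2 - u1)) by (apply Rmult_le_compat_l; lra).
        lra. }
    assert (Hm : INR (Nat.min i j) <= INR j) by (apply le_INR; lia).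
    assert (H0 : 0 <= f j u2 - f j u1) by (generalize (fmono I f Hf j u1 u2 Hj H1 H2); lra).
    assert (H0' : 0 <= INR (Nat.min i j)) by apply pos_INR.
    assert (INR (Nat.min i j) * (f j u2 - f j u1) <= INR j * (z * (u2 - u1))).
    { apply Rmult_le_compat; auto. }
    lra. }
  unfold phi.
  assert (sumR I (fun j => 2 * INR (Nat.min i j) * f j u2) - sumR I (fun j => 2 * INR (Nat.min i j) * f j u1)
     <= 2 * sumR I s * (u2 - u1)).
  { rewrite <- sumR_minus.
    replace (2 * sumR I s * (u2 - u1)) with (sumR I (fun j => 2 * s j * (u2 - u1))).
    - apply sumR_le. intros j Hj. specialize (HJ j Hj). lra.
    - rewrite (sumR_ext I _ (fun j => (2 * (u2 - u1)) * s j)) by (intros; ring).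
      rewrite sumR_scal; ring. }
  lra.
Qed.

Lemma quot_lower b (G : R -> R -> R) t c u h :
  (forall u1 u2, dom b u1 -> dom b u2 -> u1 <= u2 -> c * (u2 - u1) <= G u2 t - G u1 t) ->
  dom b u -> dom b (u + h) -> h <> 0 -> c <= (G (u + h) t - G u t) / h.
Proof.
  intros H Du Dh Hh. destruct (Rlt_or_le 0 h) as [Hp|Hn].
  - assert (A := H u (u+h) Du Dh ltac:(lra)).
    apply (Rmult_le_reg_r h); auto. unfold Rdiv; rewrite Rmult_assoc, Rinv_l, Rmult_1_r; auto.
    replace (u + h - u) with h in A by ring. lra.
  - assert (A := H (u+h) u Dh Du ltac:(lra)).
    assert (Hn' : h < 0) by lra.
    replace ((G (u + h) t - G u t) / h) with ((G u t - G (u + h) t) / (- h)) by (field; auto).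
    apply (Rmult_le_reg_r (-h)); [lra|]. unfold Rdiv; rewrite Rmult_assoc, Rinv_l, Rmult_1_r; [|lra].
    replace (u - (u + h)) with (-h) in A by ring. lra.
Qed.

Lemma pdu_lower b (G : R -> R -> R) t c u d :
  (forall u1 u2, dom b u1 -> dom b u2 -> u1 <= u2 -> c * (u2 - u1) <= G u2 t - G u1 t) ->
  dom b u -> pdu b G u t d -> c <= d.
Proof.
  intros H Du Hd. apply (tends_ge1 (Pu b u) (fun h => (G (u + h) t - G u t) / h)); auto.
  - apply Pu_proper; auto.
  - exists 1; split; [lra|]. intros h _ [Hh Dh]. apply quot_lower with b; auto.
Qed.

Fixpoint YT (I : nat) (Pb : nat -> R -> R -> R) (n : nat) (w t : R) {struct n} : R * R :=
  match n with
  | O => (w, Pb I w t)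
  | S n' => (fst (YT I Pb n' w t) + 2 * snd (YT I Pb n' w t),
             snd (YT I Pb n' w t) + Pb (I - S n')%nat (fst (YT I Pb n' w t) + 2 * snd (YT I Pb n' w t)) t)
  end.

Section YTsec.
Variable I : nat.
Variable Pb : nat -> R -> R -> R.
Variable b : bool.

Hypothesis HPpos : forall j z t, (1 <= j <= I)%nat -> dom b z -> 0 <= t -> 0 <= Pb j z t.
Hypothesis HPmono : forall j z1 z2 t, (1 <= j <= I)%nat -> dom b z1 -> z1 <= z2 -> 0 <= t ->
  Pb j z1 t <= Pb j z2 t.

Lemma Y_mono n : (n < I)%nat -> forall w1 w2 t, dom b w1 -> w1 <= w2 -> 0 <= t ->
  w2 - w1 <= fst (YT I Pb n w2 t) - fst (YT I Pb n w1 t) /\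
  snd (YT I Pb n w1 t) <= snd (YT I Pb n w2 t) /\ 0 <= snd (YT I Pb n w1 t) /\
  w1 <= fst (YT I Pb n w1 t).
Proof.
  induction n as [|n IH]; intros Hn w1 w2 t D1 H12 Ht; simpl.
  - split; [lra|]. split; [apply HPmono; auto; lia|]. split; [apply HPpos; auto; lia|lra].
  - destruct (IH ltac:(lia) w1 w2 t D1 H12 Ht) as [A [B [C E]]].
    set (x1 := fst (YT I Pb n w1 t) + 2 * snd (YT I Pb n w1 t)).
    set (x2 := fst (YT I Pb n w2 t) + 2 * snd (YT I Pb n w2 t)).
    assert (Dx1 : dom b x1) by (replace x1 with (w1 + (x1 - w1)) by ring; apply dom_add; auto; unfold x1; lra).
    assert (Hx : x1 <= x2) by (unfold x1, x2; lra).
    assert (P1 := HPmono (I - S n) x1 x2 t ltac:(lia) Dx1 Hx Ht).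
    assert (P2 := HPpos (I - S n) x1 t ltac:(lia) Dx1 Ht).
    unfold x1, x2 in *. lra.
Qed.

Lemma Y_fst n : (n <= I)%nat -> forall w1 w2 t, dom b w1 -> w1 <= w2 -> 0 <= t ->
  w2 - w1 <= fst (YT I Pb n w2 t) - fst (YT I Pb n w1 t) /\ w1 <= fst (YT I Pb n w1 t).
Proof.
  destruct n as [|n]; intros Hn w1 w2 t D1 H12 Ht; simpl; [lra|].
  destruct (Y_mono n ltac:(lia) w1 w2 t D1 H12 Ht) as [A [B [C E]]]. lra.
Qed.

Lemma Y_dom n : (n <= I)%nat -> forall w t, dom b w -> 0 <= t -> dom b (fst (YT I Pb n w t)).
Proof.
  intros Hn w t Dw Dt. destruct (Y_fst n Hn w w t Dw (Rle_refl _) Dt) as [_ A].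
  replace (fst (YT I Pb n w t)) with (w + (fst (YT I Pb n w t) - w)) by ring.
  apply dom_add; auto; lra.
Qed.

Lemma Y_Ck k : (forall j, (1 <= j <= I)%nat -> Ck b k (Pb j)) ->
  forall n, (n < I)%nat -> Ck b k (fun w t => fst (YT I Pb n w t)) /\ Ck b k (fun w t => snd (YT I Pb n w t)).
Proof.
  intros HPk. induction n as [|n IH]; intros Hn.
  - split.
    + apply Ck_ext with (fun u _ => u); [intros; reflexivity| apply Ck_u].
    + apply Ck_ext with (Pb I); [intros; reflexivity| apply HPk; lia].
  - destruct (IH ltac:(lia)) as [A B].
    assert (C : Ck b k (fun w t => fst (YT I Pb (S n) w t))).
    { apply Ck_ext with (fun w t => fst (YT I Pb n w t) + 2 * snd (YT I Pb n w t)); [intros; reflexivity|].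
      apply Ck_plus; auto. apply Ck_scal; auto. }
    split; auto.
    apply Ck_ext with (fun w t => snd (YT I Pb n w t) + Pb (I - S n)%nat (fst (YT I Pb (S n) w t)) t);
      [intros; reflexivity|].
    apply Ck_plus; auto.
    apply (Ck_comp b k (Pb (I - S n)%nat) (fun w t => fst (YT I Pb (S n) w t))); auto.
    + apply HPk; lia.
    + intros; apply Y_dom; auto; lia.
Qed.

Lemma Y_Ck_fst k : (forall j, (1 <= j <= I)%nat -> Ck b k (Pb j)) ->
  forall n, (n <= I)%nat -> Ck b k (fun w t => fst (YT I Pb n w t)).
Proof.
  intros HPk n Hn. destruct n as [|n].
  - apply Ck_ext with (fun u _ => u); [intros; reflexivity| apply Ck_u].
  - destruct (Y_Ck k HPk n ltac:(lia)) as [A B].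
    apply Ck_ext with (fun w t => fst (YT I Pb n w t) + 2 * snd (YT I Pb n w t)); [intros; reflexivity|].
    apply Ck_plus; auto. apply Ck_scal; auto.
Qed.

End YTsec.

Lemma sumR_S n a : sumR (S n) a = sumR n a + a (S n).
Proof. reflexivity. Qed.

Lemma sumR_delta n m (a : nat -> R) : (1 <= m <= n)%nat ->
  sumR n (fun j => if Nat.eqb j m then a j else 0) = a m.
Proof.
  induction n as [|n IH]; intros Hm; [lia|]. rewrite sumR_S.
  destruct (Nat.eqb_spec (S n) m) as [E|E].
  - subst. rewrite (sumR_ext n _ (fun _ => 0)). rewrite sumR_0; ring.
    intros j Hj. destruct (Nat.eqb_spec j (S n)); [lia|auto].
  - rewrite IH by lia. ring.
Qed.

Definition Sk (I : nat) (f : nat -> R -> R) (k : nat) (u : R) : R :=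
  sumR I (fun j => if Nat.leb k j then f j u else 0).

Lemma phi_step I f k u : (1 <= k)%nat -> phi I f (k - 1) u = phi I f k u + 2 * Sk I f k u.
Proof.
  intros Hk. unfold phi, Sk.
  assert (E : sumR I (fun j => 2 * INR (Nat.min (k - 1) j) * f j u) =
     sumR I (fun j => 2 * INR (Nat.min k j) * f j u) - 2 * sumR I (fun j => if Nat.leb k j then f j u else 0)).
  { rewrite <- sumR_scal, <- sumR_minus. apply sumR_ext. intros j Hj.
    destruct (Nat.leb_spec k j).
    - rewrite Nat.min_l by lia. rewrite Nat.min_l by lia.
      replace k with (S (k - 1)) at 2 by lia. rewrite S_INR. ring.
    - rewrite Nat.min_r by lia. rewrite Nat.min_r by lia. ring. }
  rewrite E. ring.
Qed.

Lemma Sk_step I f k u : (1 <= k - 1 <= I)%nat -> Sk I f (k - 1) u = Sk I f k u + f (k - 1)%nat u.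
Proof.
  intros Hk. unfold Sk. rewrite <- (sumR_delta I (k-1) (fun j => f j u)) by lia.
  rewrite <- sumR_plus. apply sumR_ext. intros j Hj.
  destruct (Nat.leb_spec (k-1) j); destruct (Nat.leb_spec k j); destruct (Nat.eqb_spec j (k-1)); try lia; ring.
Qed.

Lemma Sk_I I f u : (1 <= I)%nat -> Sk I f I u = f I u.
Proof.
  intros HI. unfold Sk. rewrite <- (sumR_delta I I (fun j => f j u)) by lia.
  apply sumR_ext. intros j Hj.
  destruct (Nat.leb_spec I j); destruct (Nat.eqb_spec j I); try lia; subst; auto.
Qed.

Lemma phi_zero I f u : phi I f 0 u = u.
Proof.
  unfold phi. rewrite (sumR_ext I _ (fun _ => 0)). rewrite sumR_0; ring.
  intros j _. simpl. ring.
Qed.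

Lemma Y_id I f Pb t u : (1 <= I)%nat ->
  (forall j, (1 <= j <= I)%nat -> Pb j (phi I f j u) t = f j u) ->
  (forall n, (n < I)%nat -> YT I Pb n (phi I f I u) t = (phi I f (I - n) u, Sk I f (I - n) u)) /\
  fst (YT I Pb I (phi I f I u) t) = u.
Proof.
  intros HI HP.
  assert (A : forall n, (n < I)%nat -> YT I Pb n (phi I f I u) t = (phi I f (I - n) u, Sk I f (I - n) u)).
  { induction n as [|n IH]; intros Hn.
    - simpl. rewrite Nat.sub_0_r. rewrite HP, Sk_I; auto; lia.
    - simpl. rewrite IH by lia. simpl.
      assert (E1 : phi I f (I - n) u + 2 * Sk I f (I - n) u = phi I f (I - S n) u).
      { replace (I - S n)%nat with ((I - n) - 1)%nat by lia. rewrite phi_step; auto; lia. }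
      rewrite E1. rewrite HP by lia.
      replace (I - S n)%nat with ((I - n) - 1)%nat by lia. rewrite Sk_step by lia. auto. }
  split; auto.
  replace I with (S (I - 1)) at 2 by lia. simpl. rewrite A by lia. simpl.
  replace (I - (I - 1))%nat with 1%nat by lia.
  rewrite <- phi_step by lia. apply phi_zero.
Qed.

Lemma Y_neg I Pb t w : (1 <= I)%nat -> w < 0 ->
  (forall j, (1 <= j <= I)%nat -> Pb j w t = 0) ->
  (forall n, (n < I)%nat -> YT I Pb n w t = (w, 0)) /\ fst (YT I Pb I w t) = w.
Proof.
  intros HI Hw HP.
  assert (A : forall n, (n < I)%nat -> YT I Pb n w t = (w, 0)).
  { induction n as [|n IH]; intros Hn.
    - simpl. rewrite HP; auto; lia.
    - simpl. rewrite IH by lia. simpl. replace (w + 2 * 0) with w by ring.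
      rewrite HP by lia. f_equal; ring. }
  split; auto. replace I with (S (I - 1)) at 2 by lia. simpl. rewrite A by lia. simpl. ring.
Qed.

Lemma ext0_pos g z : 0 <= z -> ext0 g z = g z.
Proof. intros H. unfold ext0. destruct (Rle_dec 0 z); [auto|lra]. Qed.
Lemma ext0_neg g z : z < 0 -> ext0 g z = 0.
Proof. intros H. unfold ext0. destruct (Rle_dec 0 z); [lra|auto]. Qed.
Lemma ext0_nonneg g z : classC g -> 0 <= ext0 g z.
Proof. intros Hg. unfold ext0. destruct (Rle_dec 0 z); [apply Hg; auto|lra]. Qed.
Lemma ext0_mono g z1 z2 : classC g -> z1 <= z2 -> ext0 g z1 <= ext0 g z2.
Proof.
  intros Hg H. unfold ext0. destruct (Rle_dec 0 z1); destruct (Rle_dec 0 z2); try lra.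
  - apply Hg; auto.
  - apply Hg; auto.
Qed.

Lemma classCq_Ck q g : classCq q g -> Ck false q (fun u _ => ext0 g u).
Proof. intros [_ H]. apply CqR_Ck; auto. Qed.

Lemma phi_Ck b q I (F : nat -> R -> R -> R) i :
  (forall j, (1 <= j <= I)%nat -> Ck b q (F j)) ->
  Ck b q (fun u t => u - sumR I (fun j => 2 * INR (Nat.min i j) * F j u t)).
Proof.
  intros HF. apply Ck_minus. apply Ck_u.
  apply (Ck_sumR b q I (fun j u t => 2 * INR (Nat.min i j) * F j u t)).
  intros j Hj. apply Ck_scal. auto.
Qed.

Section Main.
Variable I q : nat.
Variable psi : nat -> R -> R -> R.
Hypothesis Hpsi : forall t, 0 <= t -> inF I (fun i u => psi i u t).

Let ft t := fun i u => psi i u t.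
Let psibar := fun i z t => Upsilon I (fun j u => psi j u t) i z.

Section DirA.
Hypothesis H1 : forall t, 0 <= t -> inDq q I (fun i u => psi i u t).
Hypothesis H2 : forall i, (1 <= i <= I)%nat -> Cq_quad q (psi i).

Lemma epsA t : 0 <= t -> exists eps, 0 < eps <= 1 /\ forall i, (1 <= i <= I)%nat -> forall u1 u2, 0 <= u1 -> u1 <= u2 ->
    eps * (u2 - u1) <= phi I (ft t) i u2 - phi I (ft t) i u1.
Proof. intros Ht. apply D_eps. apply Hpsi; auto. apply (H1 t Ht). Qed.

Lemma A_joint i : (1 <= i <= I)%nat -> Ck true q (psibar i).
Proof.
  intros Hi.
  assert (HC : forall j, (1 <= j <= I)%nat -> Ck true q (psi j)) by (intros; apply Cq_quad_Ck, H2; auto).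
  set (G := fun u t => phi I (ft t) i u).
  set (H := fun z t => inv_Rp (phi I (ft t) i) z).
  assert (HG : Ck true q G).
  { apply Ck_ext with (fun u t => u - sumR I (fun j => 2 * INR (Nat.min i j) * psi j u t)).
    { intros; reflexivity. }
    apply phi_Ck; auto. }
  assert (HH : Ck true q H).
  { apply (Ck_invf true q G H HG).
    - intros t u1 u2 Ht D1 D2 L. apply (phi_strict I (ft t) (Hpsi t Ht)); simpl in *; auto; lia.
    - intros z t Dz Dt. apply (inv_spec I (ft t) (Hpsi t Dt)); simpl in *; auto; lia.
    - intros x s d Dx Ds Hd. destruct (epsA s Ds) as [eps [Heps K]].
      assert (eps <= d); [|lra].
      apply (pdu_lower true G s eps x d); auto.
      intros u1 u2 D1 D2 L. apply K; auto. }
  apply Ck_ext with (fun z t => psi i (H z t) t). { intros; reflexivity. }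
  apply (Ck_comp true q (psi i) H); auto.
  intros z t Dz Dt. apply (inv_spec I (ft t) (Hpsi t Dt)); simpl in *; auto; lia.
Qed.

Lemma A_quad i : (1 <= i <= I)%nat -> Cq_quad q (psibar i).
Proof.
  intros Hi. apply Ck_Cq_quad; [|apply A_joint; auto].
  intros u t Hu Ht. apply (Ups_classC_part I (ft t) (Hpsi t Ht) i Hi); auto.
Qed.

Lemma A_classC t i : 0 <= t -> (1 <= i <= I)%nat -> classC (fun z => psibar i z t).
Proof.
  intros Ht Hi. destruct (Ups_classC_part I (ft t) (Hpsi t Ht) i Hi) as [A [B C]].
  split; [auto|split; [auto|split; [|auto]]].
  intros u Hu. apply (cont2_Rp (psibar i) u t Ht).
  apply (Ck_cont _ _ _ (A_joint i Hi)); auto.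
Qed.

Lemma A_pert t : 0 <= t -> inDbarq q I (fun i z => psibar i z t).
Proof.
  intros Ht. destruct (H1 t Ht) as [[_ HD] HCq].
  split; [split|].
  - intros i Hi. apply A_classC; auto.
  - erewrite sumRbar_ext; [apply HD|]. intros j Hj. simpl. f_equal.
    unfold psibar. rewrite <- sup_eq; auto.
  - intros i Hi. split; [apply A_classC; auto|].
    destruct (epsA t Ht) as [eps [Heps K]].
    set (Pe := fun j u (_ : R) => ext0 (ft t j) u).
    assert (HPe : forall j, (1 <= j <= I)%nat -> Ck false q (Pe j)).
    { intros j Hj. apply classCq_Ck. apply HCq; auto. }
    set (G := fun u s => u - sumR I (fun j => 2 * INR (Nat.min i j) * Pe j u s)).
    assert (EG : forall u s, G u s = if Rle_dec 0 u then phi I (ft t) i u else u).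
    { intros u s. unfold G, Pe. destruct (Rle_dec 0 u).
      - unfold phi. f_equal. apply sumR_ext. intros j Hj. rewrite ext0_pos; auto.
      - rewrite (sumR_ext I _ (fun _ => 0)). rewrite sumR_0; ring.
        intros j Hj. rewrite ext0_neg; [ring|lra]. }
    set (H := fun z (_ : R) => if Rle_dec 0 z then inv_Rp (phi I (ft t) i) z else z).
    assert (HG : Ck false q G) by (apply phi_Ck; auto).
    assert (Glow : forall s u1 u2, u1 <= u2 -> eps * (u2 - u1) <= G u2 s - G u1 s).
    { intros s u1 u2 L. rewrite !EG.
      destruct (Rle_dec 0 u1); destruct (Rle_dec 0 u2); try lra.
      - apply K; auto.
      - assert (A := K i Hi 0 u2 (Rle_refl 0) ltac:(lra)). rewrite phi_0 in A by (apply Hpsi; auto).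
        nra.
      - nra. }
    assert (HH : Ck false q H).
    { apply (Ck_invf false q G H HG).
      - intros s u1 u2 Hs D1 D2 L. assert (A := Glow s u1 u2 ltac:(lra)). nra.
      - intros z s Dz Ds. split; [simpl; auto|]. rewrite EG. unfold H.
        destruct (Rle_dec 0 z).
        + destruct (inv_spec I (ft t) (Hpsi t Ht) i z ltac:(lia) r) as [A B].
          destruct (Rle_dec 0 (inv_Rp (phi I (ft t) i) z)); [auto|lra].
        + destruct (Rle_dec 0 z); [lra|auto].
      - intros x s d Dx Ds Hd. assert (eps <= d); [|lra].
        apply (pdu_lower false G s eps x d); auto. }
    apply Ck_CqR.
    apply Ck_ext with (fun z s => Pe i (H z s) s).
    { intros z s _ _. unfold Pe, H. destruct (Rle_dec 0 z).
      - destruct (inv_spec I (ft t) (Hpsi t Ht) i z ltac:(lia) r) as [A B].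
        rewrite ext0_pos, ext0_pos; auto.
      - rewrite ext0_neg, ext0_neg; auto; lra. }
    apply (Ck_comp false q (Pe i) H); auto.
Qed.

End DirA.

Section DirB.
Hypothesis K1 : forall t, 0 <= t -> inDbarq q I (fun i z => psibar i z t).
Hypothesis K2 : forall i, (1 <= i <= I)%nat -> Cq_quad q (psibar i).

Lemma pb_classC t j : 0 <= t -> (1 <= j <= I)%nat -> classC (fun z => psibar j z t).
Proof. intros Ht Hj. apply (K1 t Ht); auto. Qed.

Lemma B_joint i : (1 <= i <= I)%nat -> Ck true q (psi i).
Proof.
  intros Hi. assert (HI : (1 <= I)%nat) by lia.
  assert (HC : forall j, (1 <= j <= I)%nat -> Ck true q (psibar j)) by (intros; apply Cq_quad_Ck, K2; auto).
  assert (HPpos : forall j z t, (1 <= j <= I)%nat -> dom true z -> 0 <= t -> 0 <= psibar j z t).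
  { intros j z t Hj Dz Dt. apply (pb_classC t j Dt Hj); auto. }
  assert (HPmono : forall j z1 z2 t, (1 <= j <= I)%nat -> dom true z1 -> z1 <= z2 -> 0 <= t ->
     psibar j z1 t <= psibar j z2 t).
  { intros j z1 z2 t Hj Dz L Dt. apply (pb_classC t j Dt Hj); auto. }
  set (G := fun w t => fst (YT I psibar I w t)).
  set (H := fun u t => phi I (ft t) I u).
  assert (HG : Ck true q G) by (apply Y_Ck_fst; auto).
  assert (Hid : forall u t, 0 <= u -> 0 <= t ->
     (forall n, (n < I)%nat -> YT I psibar n (H u t) t = (phi I (ft t) (I - n) u, Sk I (ft t) (I - n) u)) /\
     fst (YT I psibar I (H u t) t) = u).
  { intros u t Hu Ht. apply Y_id; auto. intros j Hj. unfold psibar. apply Ups_phi; auto; lia. }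
  assert (HH : Ck true q H).
  { apply (Ck_invf true q G H HG).
    - intros t u1 u2 Ht D1 D2 L. destruct (Y_fst I psibar true HPpos HPmono I (le_n I) u1 u2 t D1 (Rlt_le _ _ L) Ht).
      unfold G; lra.
    - intros z t Dz Dt. split.
      + apply (phi_nonneg I (ft t) (Hpsi t Dt)); auto.
      + apply Hid; auto.
    - intros x s d Dx Ds Hd. assert (1 <= d); [|lra].
      apply (pdu_lower true G s 1 x d); auto.
      intros u1 u2 D1 D2 L. destruct (Y_fst I psibar true HPpos HPmono I (le_n I) u1 u2 s D1 L Ds).
      unfold G; lra. }
  apply Ck_ext with (fun u t => psibar i (fst (YT I psibar (I - i) (H u t) t)) t).
  { intros u t Hu Ht. rewrite (proj1 (Hid u t Hu Ht)) by lia. simpl.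
    replace (I - (I - i))%nat with i by lia. unfold psibar. apply Ups_phi; auto; lia. }
  apply (Ck_comp true q (psibar i)); auto.
  - apply (Ck_comp true q (fun w t => fst (YT I psibar (I - i) w t)) H); auto.
    + apply Y_Ck_fst; auto; lia.
    + intros u t Du Dt. apply (phi_nonneg I (ft t) (Hpsi t Dt)); auto.
  - intros u t Du Dt. apply (Y_dom I psibar true HPpos HPmono); auto; [lia|]. apply (phi_nonneg I (ft t) (Hpsi t Dt)); auto.
Qed.

Lemma B_quad i : (1 <= i <= I)%nat -> Cq_quad q (psi i).
Proof.
  intros Hi. apply Ck_Cq_quad; [|apply B_joint; auto].
  intros u t Hu Ht. apply (fpos I (ft t) (Hpsi t Ht) i u Hi Hu).
Qed.

Lemma B_pert t : 0 <= t -> inDq q I (fun i u => psi i u t).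
Proof.
  intros Ht. destruct (K1 t Ht) as [[HCb HD] HCq].
  split; [split|].
  - apply Hpsi; auto.
  - erewrite sumRbar_ext; [apply HD|]. intros j Hj. simpl. f_equal.
    unfold psibar. rewrite sup_eq; auto.
  - intros i Hi. assert (HI : (1 <= I)%nat) by lia.
    split; [apply (fC I (ft t) (Hpsi t Ht)); auto|].
    set (Pe := fun j z (_ : R) => ext0 (fun z => psibar j z t) z).
    assert (HPe : forall j, (1 <= j <= I)%nat -> Ck false q (Pe j)).
    { intros j Hj. apply classCq_Ck. apply HCq; auto. }
    assert (HPpos : forall j z s, (1 <= j <= I)%nat -> dom false z -> 0 <= s -> 0 <= Pe j z s).
    { intros j z s Hj _ _. apply ext0_nonneg; apply pb_classC; auto. }
    assert (HPmono : forall j z1 z2 s, (1 <= j <= I)%nat -> dom false z1 -> z1 <= z2 -> 0 <= s ->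
       Pe j z1 s <= Pe j z2 s).
    { intros j z1 z2 s Hj _ L _. apply ext0_mono; auto; apply pb_classC; auto. }
    set (G := fun w s => fst (YT I Pe I w s)).
    set (H := fun u (_ : R) => if Rle_dec 0 u then phi I (ft t) I u else u).
    assert (HG : Ck false q G) by (apply Y_Ck_fst; auto).
    assert (Hid : forall u s, 0 <= u ->
       (forall n, (n < I)%nat -> YT I Pe n (phi I (ft t) I u) s = (phi I (ft t) (I - n) u, Sk I (ft t) (I - n) u)) /\
       fst (YT I Pe I (phi I (ft t) I u) s) = u).
    { intros u s Hu. apply Y_id; auto. intros j Hj. unfold Pe. rewrite ext0_pos.
      - unfold psibar. apply Ups_phi; auto; lia.
      - apply (phi_nonneg I (ft t) (Hpsi t Ht)); auto; lia. }
    assert (Hneg : forall u s, u < 0 ->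
       (forall n, (n < I)%nat -> YT I Pe n u s = (u, 0)) /\ fst (YT I Pe I u s) = u).
    { intros u s Hu. apply Y_neg; auto. intros j Hj. unfold Pe. apply ext0_neg; auto. }
    assert (HH : Ck false q H).
    { apply (Ck_invf false q G H HG).
      - intros s u1 u2 Hs D1 D2 L. destruct (Y_fst I Pe false HPpos HPmono I (le_n I) u1 u2 s D1 (Rlt_le _ _ L) Hs).
        unfold G; lra.
      - intros z s Dz Ds. split; [simpl; auto|]. unfold G, H. destruct (Rle_dec 0 z).
        + apply Hid; auto.
        + apply Hneg; lra.
      - intros x s d Dx Ds Hd. assert (1 <= d); [|lra].
        apply (pdu_lower false G s 1 x d); auto.
        intros u1 u2 D1 D2 L. destruct (Y_fst I Pe false HPpos HPmono I (le_n I) u1 u2 s D1 L Ds).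
        unfold G; lra. }
    apply Ck_CqR.
    apply Ck_ext with (fun u s => Pe i (fst (YT I Pe (I - i) (H u s) s)) s).
    { intros u s _ _. unfold H. destruct (Rle_dec 0 u).
      - rewrite (proj1 (Hid u s r)) by lia. simpl.
        replace (I - (I - i))%nat with i by lia. unfold Pe. rewrite ext0_pos.
        + rewrite ext0_pos by auto. unfold psibar. apply Ups_phi; auto; lia.
        + apply (phi_nonneg I (ft t) (Hpsi t Ht)); auto; lia.
      - rewrite (proj1 (Hneg u s ltac:(lra))) by lia. simpl. unfold Pe.
        rewrite !ext0_neg; auto; lra. }
    apply (Ck_comp false q (Pe i)); auto.
    apply (Ck_comp false q (fun w s => fst (YT I Pe (I - i) w s)) H); auto.
    apply Y_Ck_fst; auto; lia.
Qed.

End DirB.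
End Main.

Theorem lemma6p4 (I q : nat) (psi : nat -> R -> R -> R)
  (Hpsi : forall t, 0 <= t -> inF I (fun i u => psi i u t)) :
  let psibar := fun i z t => Upsilon I (fun j u => psi j u t) i z in
  ((forall t, 0 <= t -> inDq q I (fun i u => psi i u t)) /\
   (forall i, (1 <= i <= I)%nat -> Cq_quad q (psi i)))
  <->
  ((forall t, 0 <= t -> inDbarq q I (fun i z => psibar i z t)) /\
   (forall i, (1 <= i <= I)%nat -> Cq_quad q (psibar i))).
Proof.
  intros psibar. split.
  - intros [H1 H2]. split.
    + intros t Ht. exact (A_pert I q psi Hpsi H1 H2 t Ht).
    + intros i Hi. exact (A_quad I q psi Hpsi H1 H2 i Hi).
  - intros [K1 K2]. split.
    + intros t Ht. exact (B_pert I q psi Hpsi K1 t Ht).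
    + intros i Hi. exact (B_quad I q psi Hpsi K1 K2 i Hi).
Qed.
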